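(* Under the setting and hypotheses of Theorem 1 (state-feedback protocol, all roots of $s^{m-1}+a_{m-1}s^{m-2}+\cdots+a_1$ with strictly negative real part, $\mathcal{G}_{\sigma(t)}$ uniformly jointly quasi-strongly connected), assume in addition that every graph $\mathcal{G}_k$, $k\in\mathcal{S}$, is balanced, i.e. $1_N^TL_{\mathcal{G}_k}=0_N^T$. Then for every initial condition, $$\lim_{t\to\infty}x_i(t)=\Big(\frac{1}{a_1N}\sum_{j=1}^N K_2x_j(0),\,0,\dots,0\Big)^T,\qquad i=1,\dots,N.$$
   Context: Agents: $\dot x_i=Ax_i+Bu_i$, $x_i\in\mathbb{R}^m$, $m\ge2$, where $A$ has ones on the superdiagonal and zeros elsewhere and $B=(0,\dots,0,1)^T$. Protocol: $u_i=K_1x_i-\sum_{j\in\mathcal{N}_i(\sigma(t))}\alpha^{ij}_{\sigma(t)}K_2(x_i-x_j)$ with $K_1=(0,-a_1,\dots,-a_{m-1})$, $K_2=(a_1,\dots,a_{m-1},1)$. Switching digraphs $\mathcal{G}_{\sigma(t)}$ from a finite family with positive edge weights $\alpha^{ij}_k$ (edge $e_{ij}$: $i$ receives from $j$, no self-loops), piecewise constant $\sigma$ with dwell time bounded below by $\tau_D>0$. Laplacian $L_{\mathcal{G}_k}$: off-diagonal entry $(i,j)$ equals $-\alpha^{ij}_k$, diagonal entry $(i,i)$ equals $\sum_{j\in\mathcal{N}_i(k)}\alpha^{ij}_k$. Uniformly jointly quasi-strongly connected: there is $T>0$ such that for every $t\ge0$ the union of edges of $\mathcal{G}_{\sigma(s)}$,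 $s\in[t,t+T)$, forms a digraph with a node from which every other node is reachable by a directed path. *)

(* Defs.v *)
From Stdlib Require Import Reals Lra.
Open Scope R_scope.

Fixpoint fsum (n : nat) (f : nat -> R) : R :=
  match n with O => 0 | S n' => fsum n' f + f n' end.

(* vectors of R^m are functions nat -> R, components 0..m-1 *)
Definition dot (m : nat) (u v : nat -> R) : R := fsum m (fun l => u l * v l).

(* a : nat -> R holds the coefficients a_1, ..., a_{m-1} at indices 1..m-1 *)
Definition K1vec (a : nat -> R) (l : nat) : R :=
  if Nat.eqb l 0 then 0 else - a l.
(* K2 = (a_1, ..., a_{m-1}, 1) *)
Definition K2vec (m : nat) (a : nat -> R) (l : nat) : R :=
  if Nat.ltb (l + 1) m then a (l + 1)%nat else 1.

(* complex numbers as pairs (Re, Im) *)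
Definition C := (R * R)%type.
Definition Cadd (z w : C) : C := (fst z + fst w, snd z + snd w).
Definition Cmul (z w : C) : C :=
  (fst z * fst w - snd z * snd w, fst z * snd w + snd z * fst w).
Fixpoint Cpow (z : C) (n : nat) : C :=
  match n with O => (1, 0) | S n' => Cmul z (Cpow z n') end.
Fixpoint Csum (n : nat) (f : nat -> C) : C :=
  match n with O => (0, 0) | S n' => Cadd (Csum n' f) (f n') end.

(* p(s) = s^{m-1} + a_{m-1} s^{m-2} + ... + a_2 s + a_1 *)
Definition char_poly (m : nat) (a : nat -> R) (z : C) : C :=
  Cadd (Cpow z (m - 1)) (Csum (m - 1) (fun l => Cmul (a (l + 1)%nat, 0) (Cpow z l))).

Definition hurwitz (m : nat) (a : nat -> R) : Prop :=
  forall z : C, char_poly m a z = (0, 0) -> fst z < 0.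

(* Graph family: alpha k i j = weight of edge e_ij (i receives from j) in G_k;
   edge present iff alpha k i j > 0, absent iff alpha k i j = 0. *)
Definition valid_weights (N M : nat) (alpha : nat -> nat -> nat -> R) : Prop :=
  forall k i j, (k < M)%nat -> (i < N)%nat -> (j < N)%nat ->
    0 <= alpha k i j /\ alpha k i i = 0.

Definition laplacian (N : nat) (alpha : nat -> nat -> nat -> R) (k i j : nat) : R :=
  if Nat.eqb i j then fsum N (fun l => alpha k i l) else - alpha k i j.

Definition balanced (N : nat) (alpha : nat -> nat -> nat -> R) (k : nat) : Prop :=
  forall j, (j < N)%nat -> fsum N (fun i => laplacian N alpha k i j) = 0.

(* E v u : v receives from u, i.e. a directed edge from u to v.
   reachable E r v : there is a directed path from r to v. *)
Inductive reachable (E : nat -> nat -> Prop) (r : nat) : nat -> Prop :=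
| reach_refl : reachable E r r
| reach_step : forall u v, reachable E r u -> E v u -> reachable E r v.

Definition union_edge (N : nat) (alpha : nat -> nat -> nat -> R) (sigma : R -> nat)
  (t T : R) (v u : nat) : Prop :=
  (v < N)%nat /\ (u < N)%nat /\ exists s, t <= s < t + T /\ alpha (sigma s) v u > 0.

Definition uniformly_jointly_quasi_strongly_connected (N : nat)
  (alpha : nat -> nat -> nat -> R) (sigma : R -> nat) : Prop :=
  exists T, T > 0 /\ forall t, 0 <= t ->
    exists r, (r < N)%nat /\
      forall v, (v < N)%nat -> reachable (union_edge N alpha sigma t T) r v.

Definition switching_signal (M : nat) (sigma : R -> nat) (tauD : R) (ts : nat -> R) : Prop :=
  ts 0%nat = 0 /\
  (forall k, ts (S k) - ts k >= tauD) /\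
  (forall k t, ts k <= t < ts (S k) -> sigma t = sigma (ts k)) /\
  (forall t, 0 <= t -> (sigma t < M)%nat).

Definition input (N m : nat) (a : nat -> R) (alpha : nat -> nat -> nat -> R)
  (k : nat) (X : nat -> nat -> R) (i : nat) : R :=
  dot m (K1vec a) (X i)
  - fsum N (fun j => alpha k i j * dot m (K2vec m a) (fun l => X i l - X j l)).

(* component l of A x_i + B u_i *)
Definition rhs (N m : nat) (a : nat -> R) (alpha : nat -> nat -> nat -> R)
  (k : nat) (X : nat -> nat -> R) (i l : nat) : R :=
  if Nat.ltb (l + 1) m then X i (l + 1)%nat else input N m a alpha k X i.

(* x i t l = component l of x_i(t). Solution on [0,oo): continuous, and satisfies
   the ODE at every t > 0 that is not a switching time. *)
Definition is_solution (N m : nat) (a : nat -> R) (alpha : nat -> nat -> nat -> R)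
  (sigma : R -> nat) (ts : nat -> R) (x : nat -> R -> nat -> R) : Prop :=
  (forall i l, (i < N)%nat -> (l < m)%nat -> forall t, 0 <= t ->
     forall eps, eps > 0 -> exists delta, delta > 0 /\
       forall s, 0 <= s -> Rabs (s - t) < delta -> Rabs (x i s l - x i t l) < eps) /\
  (forall t, 0 < t -> (forall k, t <> ts k) ->
     forall i l, (i < N)%nat -> (l < m)%nat ->
       derivable_pt_lim (fun s => x i s l) t (rhs N m a alpha (sigma t) (fun j => x j t) i l)).

Definition converges_to (f : R -> R) (c : R) : Prop :=
  forall eps, eps > 0 -> exists T, forall t, t >= T -> Rabs (f t - c) < eps.

(* Main.v *)
Require Import Defs.
From Stdlib Require Import Reals Lra Lia ZArith Classical ClassicalEpsilon.
From HB Require structures.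
From mathcomp Require all_boot all_order all_algebra.
From mathcomp Require Rstruct complex.
Module FTAM.
Import HB.structures.
Import all_boot all_order all_algebra.
Import Rstruct complex.
Import GRing.Theory.
Local Open Scope ring_scope.
Definition psi (x : (Rdefinitions.R)[i]) : Defs.C := (Re x, Im x).
Lemma psiD x y : psi (x + y) = Cadd (psi x) (psi y).
Proof. by case: x => a b; case: y => c d. Qed.
Lemma psiM x y : psi (x * y) = Cmul (psi x) (psi y).
Proof. by case: x => a b; case: y => c d. Qed.
Lemma psiX x n : psi (x ^+ n) = Cpow (psi x) n.
Proof. elim: n => [|n IH] //. by rewrite exprS psiM IH. Qed.
Lemma psiS n (F : nat -> (Rdefinitions.R)[i]) : psi (\sum_(i < n) F i) = Csum n (fun i => psi (F i)).
Proof. elim: n => [|n IH]; first by rewrite big_ord0.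
by rewrite big_ord_recr /= psiD IH. Qed.
Lemma fta (n : nat) (c : nat -> Defs.C) : (0 < n)%coq_nat ->
  exists z, Cpow z n = Csum n (fun j => Cmul (c j) (Cpow z j)).
Proof.
move=> /ltP n0.
have [x Hx] := @complex_acf_axiom Rdefinitions.R n (fun j => Complex (fst (c j)) (snd (c j))) n0.
exists (psi x). rewrite -psiX Hx.
rewrite (psiS n (fun i : nat => ((c i).1 +i* (c i).2)%C * x ^+ i)).
have E: forall j, psi (Complex (fst (c j)) (snd (c j)) * x ^+ j) = Cmul (c j) (Cpow (psi x) j).
  by move=> j; rewrite psiM psiX; case: (c j).
by elim: (n) => //= k ->; rewrite E.
Qed.
End FTAM.

Set Bullet Behavior "Strict Subproofs".
Open Scope R_scope.
Definition fta := FTAM.fta.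

Lemma fsum_ext n f g : (forall i, (i < n)%nat -> f i = g i) -> fsum n f = fsum n g.
Proof. induction n; simpl; intros H; auto. rewrite IHn by (intros; apply H; lia). rewrite H by lia. auto. Qed.

Lemma fsum_plus n f g : fsum n (fun i => f i + g i) = fsum n f + fsum n g.
Proof. induction n; simpl; [lra|]. rewrite IHn. ring. Qed.

Lemma fsum_scal n c f : fsum n (fun i => c * f i) = c * fsum n f.
Proof. induction n; simpl; [ring|]. rewrite IHn. ring. Qed.

Lemma fsum_opp n f : fsum n (fun i => - f i) = - fsum n f.
Proof. induction n; simpl; [ring|]. rewrite IHn. ring. Qed.

Lemma fsum_minus n f g : fsum n (fun i => f i - g i) = fsum n f - fsum n g.
Proof. induction n; simpl; [ring|]. rewrite IHn. ring. Qed.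

Lemma fsum_zero n : fsum n (fun _ => 0) = 0.
Proof. induction n; simpl; [ring|]. rewrite IHn. ring. Qed.

Lemma fsum_shift n f : fsum (S n) f = f O + fsum n (fun i => f (S i)).
Proof. induction n; simpl in *; [ring|]. rewrite IHn. ring. Qed.

Lemma fsum_le n f g : (forall i, (i < n)%nat -> f i <= g i) -> fsum n f <= fsum n g.
Proof. induction n; simpl; intros H; [lra|]. assert (f n <= g n) by (apply H; lia).
  assert (fsum n f <= fsum n g) by (apply IHn; intros; apply H; lia). lra. Qed.

Lemma fsum_nonneg n f : (forall i, (i < n)%nat -> 0 <= f i) -> 0 <= fsum n f.
Proof. intros H. rewrite <- (fsum_zero n). apply fsum_le. auto. Qed.

Lemma fsum_ge_term n f j : (forall i, (i < n)%nat -> 0 <= f i) -> (j < n)%nat -> f j <= fsum n f.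
Proof. induction n; simpl; intros H Hj; [lia|].
  assert (0 <= fsum n f) by (apply fsum_nonneg; intros; apply H; lia).
  assert (0 <= f n) by (apply H; lia).
  destruct (Nat.eq_dec j n). subst; lra.
  assert (f j <= fsum n f) by (apply IHn; [intros; apply H; lia | lia]). lra. Qed.

Lemma fsum_swap n p (f : nat -> nat -> R) :
  fsum n (fun i => fsum p (fun j => f i j)) = fsum p (fun j => fsum n (fun i => f i j)).
Proof. induction n; simpl. rewrite fsum_zero; auto. rewrite IHn. rewrite <- fsum_plus. auto. Qed.

Lemma fsum_delta n i (c : nat -> R) : (i < n)%nat ->
  fsum n (fun j => if Nat.eqb i j then c j else 0) = c i.
Proof. induction n; simpl; intros H; [lia|].
  destruct (Nat.eq_dec i n).
  - subst. rewrite Nat.eqb_refl. rewrite (fsum_ext n _ (fun _ => 0)). rewrite fsum_zero; ring.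
    intros j Hj. destruct (Nat.eqb_spec n j); [lia|auto].
  - rewrite IHn by lia. destruct (Nat.eqb_spec i n); [lia|ring]. Qed.

Lemma fsum_abs n f : Rabs (fsum n f) <= fsum n (fun i => Rabs (f i)).
Proof. induction n; simpl. rewrite Rabs_R0; lra.
  eapply Rle_trans. apply Rabs_triang. lra. Qed.

Lemma fsum_bound n f c : (forall i, (i < n)%nat -> f i <= c) -> fsum n f <= INR n * c.
Proof. induction n; intros H. simpl; lra.
  assert (f n <= c) by (apply H; lia). assert (fsum n f <= INR n * c) by (apply IHn; intros; apply H; lia).
  rewrite S_INR. simpl fsum. lra. Qed.

Lemma dpl_fsum n (F : nat -> R -> R) (d : nat -> R) t :
  (forall i, (i < n)%nat -> derivable_pt_lim (F i) t (d i)) ->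
  derivable_pt_lim (fun s => fsum n (fun i => F i s)) t (fsum n d).
Proof. induction n; simpl; intros H.
  - apply derivable_pt_lim_const.
  - apply (derivable_pt_lim_plus (fun s => fsum n (fun i => F i s)) (F n)).
    apply IHn; intros; apply H; lia. apply H; lia. Qed.

Lemma dpl_ext f g t d : (forall s, f s = g s) -> derivable_pt_lim f t d -> derivable_pt_lim g t d.
Proof. intros E H eps He. destruct (H eps He) as [del Hd]. exists del. intros h Hh Hh'.
  rewrite <- !E. apply Hd; auto. Qed.

Definition cont0 (f : R -> R) (t : R) : Prop :=
  forall eps, eps > 0 -> exists delta, delta > 0 /\
    forall s, 0 <= s -> Rabs (s - t) < delta -> Rabs (f s - f t) < eps.

Lemma cont_cont0 f t : continuity_pt f t -> cont0 f t.
Proof. intros H eps He. destruct (H eps He) as [d [Hd H']]. exists d; split; auto.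
  intros s _ Hs. destruct (Req_dec s t). subst. unfold Rminus; rewrite Rplus_opp_r, Rabs_R0; lra.
  apply (H' s). split. split. exact I. auto. exact Hs. Qed.

Lemma cont0_iff f t : 0 <= t -> (cont0 f t <-> continuity_pt (fun s => f (Rmax s 0)) t).
Proof. intros Ht; split.
- intros H eps He. destruct (H eps He) as [d [Hd H']]. exists d; split; auto.
  intros s [_ Hs]. simpl in *. unfold R_dist in *. rewrite (Rmax_left t 0) by lra.
  apply H'. apply Rmax_r. unfold Rmax; destruct (Rle_dec s 0).
  apply Rabs_def2 in Hs. apply Rabs_def1; lra. auto.
- intros H. apply cont_cont0 in H. intros eps He. destruct (H eps He) as [d [Hd H']]. exists d; split; auto.
  intros s Hs Hst. specialize (H' s Hs Hst). rewrite (Rmax_left s 0), (Rmax_left t 0) in H' by lra. auto. Qed.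

Lemma dpl_cont0 f t d : derivable_pt_lim f t d -> cont0 f t.
Proof. intros H. apply cont_cont0. apply derivable_continuous_pt. exists d; auto. Qed.

Lemma cont0_plus f g t : 0 <= t -> cont0 f t -> cont0 g t -> cont0 (fun s => f s + g s) t.
Proof. intros Ht Hf Hg. apply cont0_iff in Hf, Hg; auto. apply cont0_iff; auto.
  apply (continuity_pt_plus (fun s => f (Rmax s 0)) (fun s => g (Rmax s 0))); auto. Qed.
Lemma cont0_mult f g t : 0 <= t -> cont0 f t -> cont0 g t -> cont0 (fun s => f s * g s) t.
Proof. intros Ht Hf Hg. apply cont0_iff in Hf, Hg; auto. apply cont0_iff; auto.
  apply (continuity_pt_mult (fun s => f (Rmax s 0)) (fun s => g (Rmax s 0))); auto. Qed.
Lemma cont0_const c t : cont0 (fun _ => c) t.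
Proof. intros eps He. exists 1; split; [lra|]. intros. unfold Rminus; rewrite Rplus_opp_r, Rabs_R0; lra. Qed.
Lemma cont0_scal c f t : 0 <= t -> cont0 f t -> cont0 (fun s => c * f s) t.
Proof. intros. apply (cont0_mult (fun _ => c) f); auto. apply cont0_const. Qed.
Lemma cont0_minus f g t : 0 <= t -> cont0 f t -> cont0 g t -> cont0 (fun s => f s - g s) t.
Proof. intros. assert (E: forall s, f s - g s = f s + (-1) * g s) by (intros; ring).
  intros eps He. destruct (cont0_plus f (fun s => -1 * g s) t H H0 (cont0_scal (-1) g t H H1) eps He) as [d [Hd H']].
  exists d; split; auto. intros. rewrite !E. auto. Qed.
Lemma cont0_ext f g t : (forall s, f s = g s) -> cont0 f t -> cont0 g t.
Proof. intros E H eps He. destruct (H eps He) as [d [Hd H']]. exists d; split; auto. intros. rewrite <- !E; auto. Qed.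
Lemma cont0_fsum n (F : nat -> R -> R) t : 0 <= t -> (forall i, (i < n)%nat -> cont0 (F i) t) ->
  cont0 (fun s => fsum n (fun i => F i s)) t.
Proof. intros Ht. induction n; simpl; intros H. apply cont0_const.
  apply (cont0_plus (fun s => fsum n (fun i => F i s)) (F n)); auto. Qed.
Lemma cont0_exp c t : cont0 (fun s => exp (c * s)) t.
Proof. apply (dpl_cont0 _ _ (c * exp (c * t))).
  apply (derivable_pt_lim_ext (fun s => exp (c*s))). intros; auto.
  replace (c * exp (c * t)) with (exp (c*t) * (c * 1)) by ring.
  apply (derivable_pt_lim_comp (fun s => c * s) exp). apply derivable_pt_lim_scal, derivable_pt_lim_id.
  apply derivable_pt_lim_exp. Qed.

Lemma le_eps x y : (forall e, e > 0 -> x <= y + e) -> x <= y.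
Proof. intros H. destruct (Rle_dec x y); auto. specialize (H ((x - y)/2)). lra. Qed.

Lemma mvt_le f df K a b : 0 <= a -> a <= b ->
  (forall t, a < t < b -> derivable_pt_lim f t (df t) /\ df t <= K) ->
  cont0 f a -> cont0 f b -> f b - f a <= K * (b - a).
Proof.
  intros Ha Hab Hd Ca Cb. destruct (Req_dec a b). subst. lra.
  apply le_eps. intros e He.
  destruct (Ca (e/6)) as [da [Hda Ha']]. lra.
  destruct (Cb (e/6)) as [db [Hdb Hb']]. lra.
  set (r := Rmin (Rmin da db) (Rmin ((b - a)/3) (e / (3 * (Rabs K + 1)))) / 2).
  assert (HK: 0 < 3 * (Rabs K + 1)) by (pose proof (Rabs_pos K); lra).
  assert (He3: 0 < e / (3 * (Rabs K + 1))) by (apply Rdiv_lt_0_compat; lra).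
  assert (Hr0: 0 < r). { unfold r. apply Rlt_gt, Rmult_lt_0_compat; [|lra].
    repeat apply Rmin_pos; lra. }
  assert (Hr1: r < da) by (unfold r; pose proof (Rmin_l (Rmin da db) (Rmin ((b - a)/3) (e / (3 * (Rabs K + 1))))); pose proof (Rmin_l da db); lra).
  assert (Hr2: r < db) by (unfold r; pose proof (Rmin_l (Rmin da db) (Rmin ((b - a)/3) (e / (3 * (Rabs K + 1))))); pose proof (Rmin_r da db); lra).
  assert (Hr3: r < (b-a)/3) by (unfold r; pose proof (Rmin_r (Rmin da db) (Rmin ((b - a)/3) (e / (3 * (Rabs K + 1))))); pose proof (Rmin_l ((b - a)/3) (e / (3 * (Rabs K + 1)))); lra).
  assert (Hr4: r <= e / (3 * (Rabs K + 1))) by (unfold r; pose proof (Rmin_r (Rmin da db) (Rmin ((b - a)/3) (e / (3 * (Rabs K + 1))))); pose proof (Rmin_r ((b - a)/3) (e / (3 * (Rabs K + 1)))); lra).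
  destruct (MVT_cor2 f df (a + r) (b - r)) as [c [Hc1 Hc2]]. lra.
  intros c Hc. apply Hd. lra.
  assert (df c <= K) by (apply Hd; lra).
  assert (A1: Rabs (f (a + r) - f a) < e/6) by (apply Ha'; [lra| rewrite Rabs_right; lra]).
  assert (A2: Rabs (f (b - r) - f b) < e/6) by (apply Hb'; [lra| rewrite Rabs_left; lra]).
  apply Rabs_def2 in A1. apply Rabs_def2 in A2.
  assert (A3: df c * (b - r - (a + r)) <= K * (b - r - (a + r))) by (apply Rmult_le_compat_r; lra).
  assert (A4: - K * (2 * r) <= 2 * e / 3).
  { assert (- K <= Rabs K + 1) by (pose proof (Rabs_Ropp K); pose proof (Rle_abs (-K)); lra).
    apply Rle_trans with ((Rabs K + 1) * (2 * r)). apply Rmult_le_compat_r; lra.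
    assert (r * (3 * (Rabs K + 1)) <= e). { apply Rmult_le_reg_r with (/ (3 * (Rabs K + 1))).
      apply Rinv_0_lt_compat; lra. rewrite Rmult_assoc, Rinv_r by lra. unfold Rdiv in Hr4. lra. }
    assert ((Rabs K + 1) * (2 * r) = 2/3 * (r * (3 * (Rabs K + 1)))) by field. match goal with E: (Rabs K + 1) * (2 * r) = _ |- _ => rewrite E end. lra. }
  assert (K * (b - r - (a + r)) = K * (b - a) + - K * (2 * r)) by ring.
  lra.
Qed.

Section Switch.
Variable ts : nat -> R.
Variable tauD : R.
Hypothesis HtauD : 0 < tauD.
Hypothesis Hts0 : ts 0%nat = 0.
Hypothesis Htsgap : forall k, ts (S k) - ts k >= tauD.

Lemma ts_mono j k : (j <= k)%nat -> ts j <= ts k.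
Proof. induction 1. lra. pose proof (Htsgap m). lra. Qed.

Lemma ts_lower k : ts k >= INR k * tauD.
Proof. induction k. simpl. lra. rewrite S_INR. pose proof (Htsgap k). lra. Qed.

Lemma ts_unbounded r : exists k, r <= ts k.
Proof. destruct (archimed (r / tauD)) as [H1 _].
  destruct (Rle_dec (IZR (up (r / tauD))) 0).
  - exists O. rewrite Hts0. assert (r / tauD < 0 \/ r/tauD >= 0) by lra. destruct H.
    assert (r < 0). { apply Rmult_lt_reg_r with (/tauD). apply Rinv_0_lt_compat; lra. rewrite Rmult_0_l. exact H. }
    lra. lra.
  - exists (Z.to_nat (up (r / tauD))). pose proof (ts_lower (Z.to_nat (up (r / tauD)))).
    rewrite INR_IZR_INZ, Z2Nat.id in H. 2: { apply le_IZR. lra. }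
    assert (r <= IZR (up (r/tauD)) * tauD). { apply Rmult_le_reg_r with (/tauD). apply Rinv_0_lt_compat; lra.
      rewrite Rmult_assoc, Rinv_r, Rmult_1_r by lra. unfold Rdiv in H1. lra. }
    lra. Qed.

Lemma ts_interval s : 0 <= s -> exists k, ts k <= s < ts (S k).
Proof. intros Hs. destruct (ts_unbounded (s + 1)) as [n Hn].
  assert (Hlt: s < ts n) by lra. clear Hn. induction n. rewrite Hts0 in Hlt; lra.
  destruct (Rlt_dec s (ts n)). auto. exists n. lra. Qed.

Lemma ts_noswitch k t : ts k < t < ts (S k) -> forall j, t <> ts j.
Proof. intros [H1 H2] j E. subst. destruct (le_lt_dec j k).
  pose proof (ts_mono j k l). lra. pose proof (ts_mono (S k) j l). lra. Qed.

Lemma pw_mvt f df K a b : 0 <= a -> a <= b ->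
  (forall t, a < t < b -> (forall k, t <> ts k) -> derivable_pt_lim f t (df t) /\ df t <= K) ->
  (forall t, a <= t <= b -> cont0 f t) -> f b - f a <= K * (b - a).
Proof.
  intros Ha Hab Hd Hc. destruct (ts_unbounded b) as [n Hn].
  revert a b Ha Hab Hd Hc Hn. induction n; intros a b Ha Hab Hd Hc Hn.
  - rewrite Hts0 in Hn. assert (a = b) by lra. subst. lra.
  - destruct (Rle_dec b (ts n)). apply IHn; auto.
    destruct (Rle_dec (ts n) a).
    + apply (mvt_le f df); auto. intros t Ht. apply Hd. lra. apply (ts_noswitch n). lra.
      apply Hc; lra. apply Hc; lra.
    + assert (f (ts n) - f a <= K * (ts n - a)). { apply IHn; auto. lra.
        intros; apply Hd; auto; lra. intros; apply Hc; lra. lra. }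
      assert (f b - f (ts n) <= K * (b - ts n)). { apply (mvt_le f df); auto. lra. lra.
        intros t Ht. apply Hd. lra. apply (ts_noswitch n). lra. apply Hc; lra. apply Hc; lra. }
      assert (K * (b - a) = K * (ts n - a) + K * (b - ts n)) by ring. lra.
Qed.

Lemma pw_mvt_ge f df K a b : 0 <= a -> a <= b ->
  (forall t, a < t < b -> (forall k, t <> ts k) -> derivable_pt_lim f t (df t) /\ K <= df t) ->
  (forall t, a <= t <= b -> cont0 f t) -> K * (b - a) <= f b - f a.
Proof. intros Ha Hab Hd Hc.
  assert (H: (fun s => - f s) b - (fun s => - f s) a <= (- K) * (b - a)).
  { apply (pw_mvt (fun s => - f s) (fun s => - df s)); auto.
    intros t Ht Hn. destruct (Hd t Ht Hn). split. apply derivable_pt_lim_opp with (f := f); auto. lra.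
    intros t Ht. apply (cont0_ext (fun s => (-1) * f s)). intros; ring. apply cont0_scal. lra. auto. }
  simpl in H. lra. Qed.

End Switch.

Definition C0 : Defs.C := (0, 0).
Definition C1 : Defs.C := (1, 0).
Definition Copp (z : Defs.C) : Defs.C := (- fst z, - snd z).
Definition Csub (z w : Defs.C) : Defs.C := Cadd z (Copp w).

Lemma Cring_theory : ring_theory C0 C1 Cadd Cmul Csub Copp (@eq Defs.C).
Proof. constructor; intros; repeat match goal with z : Defs.C |- _ => destruct z end;
  unfold Csub, C0, C1, Cadd, Cmul, Copp; simpl; f_equal; ring. Qed.
Add Ring Cring : Cring_theory.

Lemma Csum_ext n f g : (forall i, (i < n)%nat -> f i = g i) -> Csum n f = Csum n g.
Proof. induction n; simpl; intros H; auto. rewrite IHn by (intros; apply H; lia). rewrite H by lia. auto. Qed.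
Lemma Csum_add n f g : Csum n (fun i => Cadd (f i) (g i)) = Cadd (Csum n f) (Csum n g).
Proof. induction n; simpl. unfold Cadd; simpl; f_equal; ring. rewrite IHn. ring. Qed.
Lemma Csum_scal n c f : Csum n (fun i => Cmul c (f i)) = Cmul c (Csum n f).
Proof. induction n; simpl. unfold Cmul; simpl; f_equal; ring. rewrite IHn. ring. Qed.
Lemma Csum_shift n f : Csum (S n) f = Cadd (f O) (Csum n (fun i => f (S i))).
Proof. induction n; simpl in *. change (0,0) with C0. ring. rewrite IHn. ring. Qed.
Lemma Csum_opp n f : Csum n (fun i => Copp (f i)) = Copp (Csum n f).
Proof. induction n; simpl. unfold Copp; simpl; f_equal; ring. rewrite IHn. ring. Qed.

(* identity behind the factorization p = (X - lam) q *)
Lemma IDL n (c d w : nat -> Defs.C) lam :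
  (forall j, (j < n)%nat -> d j = Cadd (c (S j)) (Cmul lam (d (S j)))) -> d n = C1 ->
  Cadd (Csum (S n) (fun k => Cmul (c k) (w k))) (Cmul lam (w n)) =
  Cadd (Csum n (fun k => Cmul (d k) (Csub (w (S k)) (Cmul lam (w k)))))
       (Cmul (Cadd (c O) (Cmul lam (d O))) (w O)).
Proof.
  revert c d w. induction n; intros c d w Hd Hn.
  - simpl. rewrite Hn. change (0,0) with C0. ring.
  - assert (E1 := Csum_shift (S n) (fun k => Cmul (c k) (w k))).
    assert (E2 := Csum_shift n (fun k => Cmul (d k) (Csub (w (S k)) (Cmul lam (w k))))).
    cbv beta in E1, E2.
    assert (H0: d O = Cadd (c 1%nat) (Cmul lam (d 1%nat))) by (apply Hd; lia).
    assert (IH: Cadd (Csum (S n) (fun k => Cmul (c (S k)) (w (S k)))) (Cmul lam (w (S n))) =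
      Cadd (Csum n (fun k => Cmul (d (S k)) (Csub (w (S (S k))) (Cmul lam (w (S k))))))
       (Cmul (Cadd (c 1%nat) (Cmul lam (d 1%nat))) (w 1%nat))).
    { apply (IHn (fun k => c (S k)) (fun k => d (S k)) (fun k => w (S k))). intros; apply Hd; lia. auto. }
    rewrite <- H0 in IH.
    change (Csum (S (S n)) (fun k => Cmul (c k) (w k))) with (Csum (S (S n)) (fun k => Cmul (c k) (w k))).
    rewrite E1, E2.
    set (A := Csum (S n) (fun k => Cmul (c (S k)) (w (S k)))) in *.
    set (B := Csum n (fun k => Cmul (d (S k)) (Csub (w (S (S k))) (Cmul lam (w (S k)))))) in *.
    assert (A = Csub (Cadd B (Cmul (d 0%nat) (w 1%nat))) (Cmul lam (w (S n)))) by (rewrite <- IH; ring).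
    rewrite H. ring.
Qed.

Fixpoint hd (c : nat -> Defs.C) (lam : Defs.C) (n k : nat) : Defs.C :=
  match k with O => C1 | S k' => Cadd (c (n - k')%nat) (Cmul lam (hd c lam n k')) end.
Definition qco (c : nat -> Defs.C) (lam : Defs.C) (n j : nat) : Defs.C := hd c lam n (n - j).

Lemma qco_rel c lam n j : (j < n)%nat ->
  qco c lam n j = Cadd (c (S j)) (Cmul lam (qco c lam n (S j))).
Proof. intros H. unfold qco. replace (n - j)%nat with (S (n - S j)) by lia. simpl.
  replace (n - (n - S j))%nat with (S j) by lia. auto. Qed.
Lemma qco_top c lam n : qco c lam n n = C1.
Proof. unfold qco. rewrite Nat.sub_diag. auto. Qed.

Definition poly (n : nat) (c : nat -> Defs.C) (z : Defs.C) : Defs.C :=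
  Cadd (Cpow z n) (Csum n (fun j => Cmul (c j) (Cpow z j))).

Lemma poly_factor n c lam z :
  poly (S n) c z = Cadd (Cmul (Csub z lam) (poly n (qco c lam n) z))
                        (Cadd (c O) (Cmul lam (qco c lam n O))).
Proof.
  unfold poly. pose proof (IDL n c (qco c lam n) (fun k => Cpow z k) lam (qco_rel c lam n) (qco_top c lam n)) as E.
  assert (E2: Csum n (fun k => Cmul (qco c lam n k) (Csub (Cpow z (S k)) (Cmul lam (Cpow z k)))) =
    Cmul (Csub z lam) (Csum n (fun k => Cmul (qco c lam n k) (Cpow z k)))).
  { rewrite <- Csum_scal. apply Csum_ext. intros. simpl. ring. }
  cbv beta in E. rewrite E2 in E.
  set (S1 := Csum (S n) (fun j => Cmul (c j) (Cpow z j))) in *.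
  set (S2 := Csum n (fun j => Cmul (qco c lam n j) (Cpow z j))) in *.
  assert (S1 = Csub (Cadd (Cmul (Csub z lam) S2) (Cmul (Cadd (c 0%nat) (Cmul lam (qco c lam n 0%nat))) (Cpow z 0))) (Cmul lam (Cpow z n))).
  { rewrite <- E. ring. }
  rewrite H. simpl Cpow. change (1,0) with C1. ring.
Qed.

Definition cdpl (F : R -> Defs.C) (t : R) (d : Defs.C) : Prop :=
  derivable_pt_lim (fun s => fst (F s)) t (fst d) /\ derivable_pt_lim (fun s => snd (F s)) t (snd d).
Definition ccont0 (F : R -> Defs.C) (t : R) : Prop :=
  cont0 (fun s => fst (F s)) t /\ cont0 (fun s => snd (F s)) t.
Definition cconv0 (F : R -> Defs.C) : Prop :=
  forall eps, eps > 0 -> exists T, forall t, t >= T -> Rabs (fst (F t)) < eps /\ Rabs (snd (F t)) < eps.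

Lemma dpl_eqv f t d d' : derivable_pt_lim f t d -> d = d' -> derivable_pt_lim f t d'.
Proof. intros H E; subst; auto. Qed.

Lemma dpl_exp_lin c t : derivable_pt_lim (fun s => exp (c * s)) t (c * exp (c * t)).
Proof. apply (derivable_pt_lim_ext (fun s => exp (c*s))). intros; auto.
  replace (c * exp (c * t)) with (exp (c*t) * (c * 1)) by ring.
  apply (derivable_pt_lim_comp (fun s => c * s) exp). apply derivable_pt_lim_scal, derivable_pt_lim_id.
  apply derivable_pt_lim_exp. Qed.

Lemma cdpl_add F G t a b : cdpl F t a -> cdpl G t b -> cdpl (fun s => Cadd (F s) (G s)) t (Cadd a b).
Proof. intros [H1 H2] [H3 H4]. split; simpl.
  apply (derivable_pt_lim_plus (fun s => fst (F s)) (fun s => fst (G s))); auto.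
  apply (derivable_pt_lim_plus (fun s => snd (F s)) (fun s => snd (G s))); auto. Qed.

Lemma cdpl_cmul k F t a : cdpl F t a -> cdpl (fun s => Cmul k (F s)) t (Cmul k a).
Proof. intros [H1 H2]. split; simpl.
  apply (derivable_pt_lim_minus (fun s => fst k * fst (F s)) (fun s => snd k * snd (F s)));
    apply derivable_pt_lim_scal; auto.
  apply (derivable_pt_lim_plus (fun s => fst k * snd (F s)) (fun s => snd k * fst (F s)));
    apply derivable_pt_lim_scal; auto. Qed.

Lemma cdpl_sub F G t a b : cdpl F t a -> cdpl G t b -> cdpl (fun s => Csub (F s) (G s)) t (Csub a b).
Proof. intros [H1 H2] [H3 H4]. split; simpl.
  apply (derivable_pt_lim_plus (fun s => fst (F s)) (fun s => - fst (G s))); auto.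
  apply (derivable_pt_lim_opp (fun s => fst (G s))); auto.
  apply (derivable_pt_lim_plus (fun s => snd (F s)) (fun s => - snd (G s))); auto.
  apply (derivable_pt_lim_opp (fun s => snd (G s))); auto. Qed.

Lemma cdpl_ext F G t d d' : (forall s, F s = G s) -> d = d' -> cdpl F t d -> cdpl G t d'.
Proof. intros E E' [H1 H2]; subst. split; eapply dpl_ext; eauto; intros; simpl; rewrite E; auto. Qed.

Lemma ccont0_sub F G t : 0 <= t -> ccont0 F t -> ccont0 G t -> ccont0 (fun s => Csub (F s) (G s)) t.
Proof. intros Ht [H1 H2] [H3 H4]. split; simpl.
  apply (cont0_ext (fun s => fst (F s) + (-1) * fst (G s))). intros; ring.
  apply cont0_plus; auto. apply cont0_scal; auto.
  apply (cont0_ext (fun s => snd (F s) + (-1) * snd (G s))). intros; ring.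
  apply cont0_plus; auto. apply cont0_scal; auto. Qed.

Lemma ccont0_cmul k F t : 0 <= t -> ccont0 F t -> ccont0 (fun s => Cmul k (F s)) t.
Proof. intros Ht [H1 H2]. split; simpl.
  apply (cont0_ext (fun s => fst k * fst (F s) + (- snd k) * snd (F s))). intros; ring.
  apply cont0_plus; auto; apply cont0_scal; auto.
  apply cont0_plus; auto; apply cont0_scal; auto. Qed.

Lemma cconv0_add F G : cconv0 F -> cconv0 G -> cconv0 (fun s => Cadd (F s) (G s)).
Proof. intros H1 H2 eps He. destruct (H1 (eps/2)) as [T1 HT1]. lra. destruct (H2 (eps/2)) as [T2 HT2]. lra.
  exists (Rmax T1 T2). intros t Ht. destruct (HT1 t) as [A1 A2]. pose proof (Rmax_l T1 T2); lra.
  destruct (HT2 t) as [B1 B2]. pose proof (Rmax_r T1 T2); lra. simpl.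
  split; eapply Rle_lt_trans; try apply Rabs_triang; lra. Qed.

Lemma cconv0_cmul k F : cconv0 F -> cconv0 (fun s => Cmul k (F s)).
Proof. intros H eps He. set (K := Rabs (fst k) + Rabs (snd k) + 1).
  assert (HK: 0 < K) by (unfold K; pose proof (Rabs_pos (fst k)); pose proof (Rabs_pos (snd k)); lra).
  destruct (H (eps / K)) as [T HT]. apply Rdiv_lt_0_compat; lra.
  exists T. intros t Ht. destruct (HT t Ht) as [A1 A2]. simpl.
  assert (B: forall a b x y, Rabs x < eps / K -> Rabs y < eps / K -> Rabs a + Rabs b + 1 = K -> Rabs (a * x + b * y) < eps).
  { intros a b x y Hx Hy HK'. eapply Rle_lt_trans. apply Rabs_triang. rewrite !Rabs_mult.
    assert (Rabs a * Rabs x <= Rabs a * (eps / K)) by (apply Rmult_le_compat_l; [apply Rabs_pos|lra]).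
    assert (Rabs b * Rabs y <= Rabs b * (eps / K)) by (apply Rmult_le_compat_l; [apply Rabs_pos|lra]).
    assert (Rabs a * (eps / K) + Rabs b * (eps / K) < eps).
    { assert (0 < eps / K) by (apply Rdiv_lt_0_compat; lra).
      apply Rlt_le_trans with ((Rabs a + Rabs b + 1) * (eps / K)). nra.
      rewrite HK'. right; field; lra. }
    lra. }
  split.
  - replace (fst k * fst (F t) - snd k * snd (F t)) with (fst k * fst (F t) + (- snd k) * snd (F t)) by ring.
    apply B; auto. rewrite Rabs_Ropp. auto.
  - apply B; auto. Qed.

Lemma cconv0_sub F G : cconv0 F -> cconv0 G -> cconv0 (fun s => Csub (F s) (G s)).
Proof. intros H1 H2. assert (H3 := cconv0_cmul (-1, 0) G H2).
  intros eps He. destruct (cconv0_add _ _ H1 H3 eps He) as [T HT]. exists T. intros t Ht.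
  destruct (HT t Ht) as [A B]. simpl in *. split.
  replace (fst (F t) + - fst (G t)) with (fst (F t) + (-1 * fst (G t) - 0 * snd (G t))) by ring. auto.
  replace (snd (F t) + - snd (G t)) with (snd (F t) + (-1 * snd (G t) + 0 * fst (G t))) by ring. auto. Qed.

Lemma cconv0_ev F G T0 : (forall t, t >= T0 -> F t = G t) -> cconv0 F -> cconv0 G.
Proof. intros E H eps He. destruct (H eps He) as [T HT]. exists (Rmax T T0). intros t Ht.
  rewrite <- E. apply HT. pose proof (Rmax_l T T0); lra. pose proof (Rmax_r T T0); lra. Qed.

Lemma sq_lt_abs p e : 0 < e -> p * p < e * e -> Rabs p < e.
Proof. intros He H. assert (E: Rabs p * Rabs p = p * p) by (rewrite <- Rabs_mult; apply Rabs_right; nra).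
  destruct (Rlt_dec (Rabs p) e); auto. assert (e * e <= Rabs p * Rabs p) by (apply Rmult_le_compat; lra). lra. Qed.

Lemma SL_bracket mu p q h1 h2 eta : mu > 0 -> h1 * h1 <= mu * mu * eta / 4 -> h2 * h2 <= mu * mu * eta / 4 ->
  - mu * (p * p + q * q) - mu * eta / 2 + 2 * (p * h1 + q * h2) <= 0.
Proof. intros Hm H1 H2.
  assert (mu * (- mu * (p * p + q * q) - mu * eta / 2 + 2 * (p * h1 + q * h2)) <= 0).
  { pose proof (Rle_0_sqr (mu * p - h1)). pose proof (Rle_0_sqr (mu * q - h2)). unfold Rsqr in *.
    assert (mu * (- mu * (p * p + q * q) - mu * eta / 2 + 2 * (p * h1 + q * h2)) =
      - ((mu * p - h1) * (mu * p - h1)) - ((mu * q - h2) * (mu * q - h2)) + h1 * h1 + h2 * h2 - mu * mu * eta / 2) by field.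
    lra. }
  destruct (Rle_dec (- mu * (p * p + q * q) - mu * eta / 2 + 2 * (p * h1 + q * h2)) 0); auto.
  assert (0 < mu * (- mu * (p * p + q * q) - mu * eta / 2 + 2 * (p * h1 + q * h2))) by (apply Rmult_lt_0_compat; lra).
  lra. Qed.

Section Stab.
Variable ts : nat -> R.
Variable tauD : R.
Hypothesis HtauD : 0 < tauD.
Hypothesis Hts0 : ts 0%nat = 0.
Hypothesis Htsgap : forall k, ts (S k) - ts k >= tauD.

Lemma SL (lam : Defs.C) v h : fst lam < 0 -> (forall t, 0 <= t -> ccont0 v t) ->
  (forall t, 0 < t -> (forall k, t <> ts k) -> cdpl v t (Cadd (Cmul lam (v t)) (h t))) ->
  cconv0 h -> cconv0 v.
Proof.
  intros Hl Hc Hd Hh eps He.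
  set (mu := - fst lam). assert (Hmu: mu > 0) by (unfold mu; lra).
  set (eta := eps * eps). assert (Heta: eta > 0) by (unfold eta; nra).
  set (del := Rmin 1 (mu * mu * eta / 4)).
  assert (Hdel: del > 0). { unfold del. apply Rmin_pos. lra. assert (0 < mu * mu) by nra.
    apply Rmult_lt_0_compat; [|lra]. apply Rmult_lt_0_compat; lra. }
  assert (Hdel1: del <= 1) by apply Rmin_l.
  assert (Hdel2: del <= mu * mu * eta / 4) by apply Rmin_r.
  destruct (Hh del Hdel) as [T1 HT1].
  set (T0 := Rmax T1 0).
  assert (HT0: 0 <= T0) by apply Rmax_r.
  assert (HT0': T0 >= T1) by (pose proof (Rmax_l T1 0); unfold T0; lra).
  set (p := fun s => fst (v s)). set (q := fun s => snd (v s)).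
  set (G := fun s => exp (mu * s) * (p s * p s + q s * q s - eta / 2)).
  set (G0 := G T0).
  assert (HG: forall t, t >= T0 -> G t <= G0).
  { intros t Ht. unfold G0.
    assert (G t - G T0 <= 0 * (t - T0)).
    { apply (pw_mvt ts tauD HtauD Hts0 Htsgap G
        (fun s => mu * exp (mu * s) * (p s * p s + q s * q s - eta / 2) +
                  exp (mu * s) * (2 * (p s * fst (Cadd (Cmul lam (v s)) (h s)) + q s * snd (Cadd (Cmul lam (v s)) (h s))))));
        auto; try lra.
      - intros s Hs Hns. destruct (Hd s ltac:(lra) Hns) as [Dp Dq]. split.
        + unfold G. apply (derivable_pt_lim_mult (fun s => exp (mu * s)) (fun s => p s * p s + q s * q s - eta / 2)).
          apply dpl_exp_lin.
          apply dpl_eqv with (2 * (p s * fst (Cadd (Cmul lam (v s)) (h s)) + q s * snd (Cadd (Cmul lam (v s)) (h s))) - 0).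
          apply (derivable_pt_lim_minus (fun s => p s * p s + q s * q s) (fun _ => eta / 2)).
          2: apply derivable_pt_lim_const.
          apply dpl_eqv with ((fst (Cadd (Cmul lam (v s)) (h s)) * p s + p s * fst (Cadd (Cmul lam (v s)) (h s))) +
                              (snd (Cadd (Cmul lam (v s)) (h s)) * q s + q s * snd (Cadd (Cmul lam (v s)) (h s)))).
          apply (derivable_pt_lim_plus (fun s => p s * p s) (fun s => q s * q s));
            apply derivable_pt_lim_mult; auto. ring. ring.
        + assert (exp (mu * s) > 0) by apply exp_pos.
          destruct (HT1 s ltac:(lra)) as [A1 A2].
          assert (B: - mu * (p s * p s + q s * q s) - mu * eta / 2 + 2 * (p s * fst (h s) + q s * snd (h s)) <= 0).
          { apply SL_bracket; auto.
            - assert (fst (h s) * fst (h s) <= del * del).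
              { assert (HH: Rabs (fst (h s)) * Rabs (fst (h s)) <= del * del).
                apply Rmult_le_compat; auto using Rabs_pos; lra.
                rewrite <- Rabs_mult in HH. rewrite Rabs_right in HH by nra. auto. }
              nra.
            - assert (snd (h s) * snd (h s) <= del * del).
              { assert (HH: Rabs (snd (h s)) * Rabs (snd (h s)) <= del * del).
                apply Rmult_le_compat; auto using Rabs_pos; lra.
                rewrite <- Rabs_mult in HH. rewrite Rabs_right in HH by nra. auto. }
              nra. }
          assert (E: mu * exp (mu * s) * (p s * p s + q s * q s - eta / 2) +
            exp (mu * s) * (2 * (p s * fst (Cadd (Cmul lam (v s)) (h s)) + q s * snd (Cadd (Cmul lam (v s)) (h s)))) =
            exp (mu * s) * (- mu * (p s * p s + q s * q s) - mu * eta / 2 + 2 * (p s * fst (h s) + q s * snd (h s)))).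
          { unfold p, q, mu. simpl. field. }
          rewrite E. assert (0 <= exp (mu * s) * - (- mu * (p s * p s + q s * q s) - mu * eta / 2 + 2 * (p s * fst (h s) + q s * snd (h s)))).
          apply Rmult_le_pos; lra. lra.
      - intros s Hs. unfold G. apply cont0_mult. lra. apply cont0_exp.
        destruct (Hc s ltac:(lra)) as [C1' C2'].
        apply cont0_minus. lra. apply cont0_plus. lra. apply cont0_mult; auto; lra. apply cont0_mult; auto; lra.
        apply cont0_const. }
    lra. }
  set (T2 := Rmax T0 (2 * Rabs G0 / (eta * mu))).
  exists T2. intros t Ht.
  assert (Ht0: t >= T0) by (pose proof (Rmax_l T0 (2 * Rabs G0 / (eta * mu))); unfold T2 in *; lra).
  assert (Ht2: t >= 2 * Rabs G0 / (eta * mu)) by (pose proof (Rmax_r T0 (2 * Rabs G0 / (eta * mu))); unfold T2 in *; lra).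
  specialize (HG t Ht0). unfold G in HG.
  assert (Hexp: exp (mu * t) >= 1 + mu * t).
  { destruct (Req_dec (mu * t) 0). rewrite H, exp_0. lra. left. apply exp_ineq1. auto. }
  assert (Hmt: eta / 2 * exp (mu * t) > Rabs G0).
  { assert (Hpos: eta * mu > 0) by nra.
    assert (X: (eta * mu) * t >= 2 * Rabs G0).
    { assert (t * (eta * mu) >= 2 * Rabs G0 / (eta * mu) * (eta * mu)) by (apply Rmult_ge_compat_r; lra).
      replace (2 * Rabs G0 / (eta * mu) * (eta * mu)) with (2 * Rabs G0) in H by (field; lra). lra. }
    assert (eta / 2 * exp (mu * t) >= eta / 2 * (1 + mu * t)) by (apply Rmult_ge_compat_l; lra).
    assert (eta / 2 * (1 + mu * t) = eta / 2 + (eta * mu) * t / 2) by field. lra. }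
  assert (HE: p t * p t + q t * q t < eta).
  { pose proof (Rle_abs G0). assert (exp (mu * t) > 0) by apply exp_pos.
    assert (exp (mu * t) * (p t * p t + q t * q t) < exp (mu * t) * eta) by nra.
    apply Rmult_lt_reg_l with (exp (mu * t)); auto. }
  split; apply sq_lt_abs; auto; unfold eta in HE.
  - assert (0 <= q t * q t) by nra. unfold p in HE; lra.
  - assert (0 <= p t * p t) by nra. unfold q in HE; lra.
Qed.


Lemma poly_root_of_fta n (c : nat -> Defs.C) : exists z, poly (S n) c z = C0.
Proof. destruct (fta (S n) (fun j => Copp (c j))) as [z Hz]. lia. exists z.
  unfold poly. rewrite Hz. rewrite <- Csum_add.
  transitivity (Csum (S n) (fun _ => C0)).
  apply Csum_ext. intros. ring.
  clear. generalize (S n). intros m. induction m. reflexivity. simpl. rewrite IHm. unfold C0, Cadd. simpl. f_equal; ring. Qed.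

Lemma GLc : forall n (c : nat -> Defs.C) (w : nat -> R -> Defs.C) (h : R -> Defs.C),
  (forall z, poly n c z = C0 -> fst z < 0) ->
  (forall j, (j < n)%nat -> forall t, 0 <= t -> ccont0 (w j) t) ->
  (forall t, 0 < t -> (forall k, t <> ts k) -> forall j, (j < n)%nat ->
     cdpl (w j) t (if Nat.ltb (S j) n then w (S j) t
                   else Cadd (Copp (Csum n (fun k => Cmul (c k) (w k t)))) (h t))) ->
  cconv0 h -> forall j, (j < n)%nat -> cconv0 (w j).
Proof.
  induction n as [|n IH]; intros c w h Hroots Hc Hd Hh j Hj. lia.
  destruct (poly_root_of_fta n c) as [lam Hlam].
  assert (Hl: fst lam < 0) by (apply Hroots; auto).
  set (d := qco c lam n).
  assert (Hr: Cadd (c O) (Cmul lam (d O)) = C0).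
  { pose proof (poly_factor n c lam lam) as E. rewrite Hlam in E. fold d in E.
    rewrite E. unfold Csub. ring. }
  assert (Hqroots: forall z, poly n d z = C0 -> fst z < 0).
  { intros z Hz. apply Hroots. rewrite (poly_factor n c lam z). fold d. rewrite Hz, Hr. ring. }
  assert (Hid: forall t, Cadd (Csum (S n) (fun k => Cmul (c k) (w k t))) (Cmul lam (w n t)) =
     Csum n (fun k => Cmul (d k) (Csub (w (S k) t) (Cmul lam (w k t))))).
  { intros t. rewrite (IDL n c d (fun k => w k t) lam (qco_rel c lam n) (qco_top c lam n)).
    fold d. rewrite Hr. ring. }
  set (u := fun k t => Csub (w (S k) t) (Cmul lam (w k t))).
  assert (Hu: forall k, (k < n)%nat -> cconv0 (u k)).
  { apply (IH d u h Hqroots).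
    - intros k Hk t Ht. unfold u. apply ccont0_sub; [lra| apply Hc; [lia|lra] | apply ccont0_cmul; [lra| apply Hc; [lia|lra]]].
    - intros t Ht Hns k Hk.
      assert (D1 := Hd t Ht Hns (S k) ltac:(lia)). assert (D0 := Hd t Ht Hns k ltac:(lia)).
      replace (Nat.ltb (S k) (S n)) with true in D0 by (symmetry; apply Nat.ltb_lt; lia).
      assert (D := cdpl_sub _ _ t _ _ D1 (cdpl_cmul lam _ t _ D0)).
      unfold u. eapply cdpl_ext; [intros; reflexivity| |exact D].
      destruct (Nat.ltb_spec (S k) n).
      + replace (Nat.ltb (S (S k)) (S n)) with true by (symmetry; apply Nat.ltb_lt; lia). auto.
      + replace (Nat.ltb (S (S k)) (S n)) with false by (symmetry; apply Nat.ltb_ge; lia).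
        assert (k = n - 1)%nat by lia. subst k. replace (S (n - 1)) with n by lia.
        rewrite <- (Hid t). unfold Csub. ring.
    - auto. }
  assert (Hw0: cconv0 (w O)).
  { apply (SL lam (w O) (fun t => if Nat.ltb 0 n then u O t else h t)); auto.
    - intros t Ht. apply Hc; [lia|lra].
    - intros t Ht Hns. assert (D0 := Hd t Ht Hns O ltac:(lia)).
      eapply cdpl_ext; [intros; reflexivity| |exact D0].
      destruct (Nat.ltb_spec 1 (S n)); destruct (Nat.ltb_spec 0 n); try lia.
      + unfold u, Csub. ring.
      + assert (n = O) by lia. subst n. specialize (Hid t).
        change (Csum 1 (fun k => Cmul (c k) (w k t))) with (Cadd C0 (Cmul (c O) (w O t))) in *.
        change (Csum 0 (fun k => Cmul (d k) (Csub (w (S k) t) (Cmul lam (w k t))))) with C0 in Hid.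
        assert (E: Cadd C0 (Cmul (c O) (w O t)) = Copp (Cmul lam (w O t))).
        { transitivity (Csub (Cadd (Cadd C0 (Cmul (c O) (w O t))) (Cmul lam (w O t))) (Cmul lam (w O t))).
          unfold Csub; ring. rewrite Hid. unfold Csub; ring. }
        rewrite E. ring.
    - destruct (Nat.ltb_spec 0 n). apply (cconv0_ev (u O) _ 0). intros. destruct (Nat.ltb_spec 0 n); try lia; auto.
      apply Hu; lia.
      apply (cconv0_ev h _ 0). intros. destruct (Nat.ltb_spec 0 n); try lia; auto. auto. }
  revert Hj. induction j; intros Hj. auto.
  apply (cconv0_ev (fun t => Cadd (u j t) (Cmul lam (w j t))) _ 0).
  intros. unfold u, Csub. ring. apply cconv0_add. apply Hu; lia. apply cconv0_cmul. apply IHj. lia.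
Qed.

End Stab.

Definition pos (x : R) := Rmax x 0.
Lemma pos_ge0 x : 0 <= pos x. Proof. apply Rmax_r. Qed.
Lemma pos_ge x : x <= pos x. Proof. apply Rmax_l. Qed.
Lemma pos_cases x : (0 <= x /\ pos x = x) \/ (x < 0 /\ pos x = 0).
Proof. unfold pos, Rmax. destruct (Rle_dec x 0); [destruct (Req_dec x 0)|]; [left|right|left]; split; lra. Qed.

Lemma possq_ineq x h : Rabs (pos (x + h) * pos (x + h) - pos x * pos x - 2 * pos x * h) <= h * h.
Proof. destruct (pos_cases x) as [[A B]|[A B]]; destruct (pos_cases (x+h)) as [[C E]|[C E]]; rewrite B, E.
  - replace ((x + h) * (x + h) - x * x - 2 * x * h) with (h * h) by ring. rewrite Rabs_right; nra.
  - rewrite Rabs_right; nra.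
  - rewrite Rabs_right; nra.
  - rewrite Rabs_right; nra. Qed.

Lemma dpl_possq_id x : derivable_pt_lim (fun u => pos u * pos u) x (2 * pos x).
Proof. intros eps He. exists (mkposreal eps He). intros h Hh Hhe. simpl in Hhe.
  replace ((pos (x + h) * pos (x + h) - pos x * pos x) / h - 2 * pos x) with
    ((pos (x + h) * pos (x + h) - pos x * pos x - 2 * pos x * h) / h) by (field; auto).
  unfold Rdiv. rewrite Rabs_mult, Rabs_inv. pose proof (possq_ineq x h).
  assert (0 < Rabs h) by (apply Rabs_pos_lt; auto).
  apply Rle_lt_trans with (h * h * / Rabs h). apply Rmult_le_compat_r. left; apply Rinv_0_lt_compat; auto. auto.
  replace (h * h) with (Rabs h * Rabs h) by (rewrite <- Rabs_mult; apply Rabs_right; nra).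
  rewrite Rmult_assoc, Rinv_r, Rmult_1_r by lra. auto. Qed.

Lemma dpl_possq f t d : derivable_pt_lim f t d ->
  derivable_pt_lim (fun s => pos (f s) * pos (f s)) t (2 * pos (f t) * d).
Proof. intros H. apply (derivable_pt_lim_comp f (fun u => pos u * pos u)); auto. apply dpl_possq_id. Qed.

Lemma fsum_const n c : fsum n (fun _ => c) = INR n * c.
Proof. induction n. simpl; ring. rewrite S_INR. simpl. rewrite IHn. ring. Qed.

Lemma pos_lip a b : Rabs (pos a - pos b) <= Rabs (a - b).
Proof. destruct (pos_cases a) as [[A B]|[A B]]; destruct (pos_cases b) as [[C E]|[C E]]; rewrite B, E;
  unfold Rabs; repeat destruct Rcase_abs; lra. Qed.

Lemma cont0_pos f t : 0 <= t -> cont0 f t -> cont0 (fun s => pos (f s)) t.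
Proof. intros Ht H eps He. destruct (H eps He) as [d [Hd H']]. exists d; split; auto.
  intros s Hs Hst. eapply Rle_lt_trans; [apply pos_lip|apply (H' s Hs Hst)]. Qed.

Section Cons.
Variable ts : nat -> R.
Variable tauD : R.
Hypothesis HtauD : 0 < tauD.
Hypothesis Hts0 : ts 0%nat = 0.
Hypothesis Htsgap : forall k, ts (S k) - ts k >= tauD.
Variable N : nat.
Variable alpha : nat -> nat -> nat -> R.
Variable sigma : R -> nat.
Variable D : R.
Hypothesis HD : D > 0.
Hypothesis Hw0 : forall t, 0 <= t -> forall i j, (i < N)%nat -> (j < N)%nat -> 0 <= alpha (sigma t) i j.
Hypothesis Hdeg : forall t, 0 <= t -> forall i, (i < N)%nat -> fsum N (fun j => alpha (sigma t) i j) <= D.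

Definition isys (y : nat -> R -> R) : Prop :=
  (forall i, (i < N)%nat -> forall t, 0 <= t -> cont0 (y i) t) /\
  (forall t, 0 < t -> (forall k, t <> ts k) -> forall i, (i < N)%nat ->
     derivable_pt_lim (y i) t (fsum N (fun j => alpha (sigma t) i j * (y j t - y i t)))).

Lemma isys_opp y : isys y -> isys (fun i t => - y i t).
Proof. intros [Hc Hd]. split.
  - intros i Hi t Ht. apply (cont0_ext (fun s => (-1) * y i s)). intros; ring. apply cont0_scal; auto.
  - intros t Ht Hns i Hi. apply dpl_eqv with (- fsum N (fun j => alpha (sigma t) i j * (y j t - y i t))).
    apply (derivable_pt_lim_opp (y i)). auto.
    rewrite <- fsum_opp. apply fsum_ext. intros; ring. Qed.

Lemma alpha_le_D t i j : 0 <= t -> (i < N)%nat -> (j < N)%nat -> alpha (sigma t) i j <= D.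
Proof. intros. eapply Rle_trans; [|apply (Hdeg t H i H0)]. apply (fsum_ge_term N (fun j => alpha (sigma t) i j)); auto.
  Qed.

Lemma inv_upper y B t0 : isys y -> 0 <= t0 -> (forall i, (i < N)%nat -> y i t0 <= B) ->
  forall t, t0 <= t -> forall i, (i < N)%nat -> y i t <= B.
Proof.
  intros [Hc Hd] Ht0 HB t Ht i Hi.
  set (K := 2 * D * INR N).
  set (V := fun s => fsum N (fun j => pos (y j s - B) * pos (y j s - B))).
  set (F := fun s => exp (- K * s) * V s).
  assert (HF: F t - F t0 <= 0 * (t - t0)).
  { apply (pw_mvt ts tauD HtauD Hts0 Htsgap F
      (fun s => - K * exp (- K * s) * V s + exp (- K * s) *
        fsum N (fun j => 2 * pos (y j s - B) * fsum N (fun k => alpha (sigma s) j k * (y k s - y j s))))); auto.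
    - intros s Hs Hns. split.
      + unfold F. apply (derivable_pt_lim_mult (fun s => exp (- K * s)) V). apply dpl_exp_lin.
        unfold V. apply (dpl_fsum N (fun j s => pos (y j s - B) * pos (y j s - B))).
        intros j Hj. apply (dpl_possq (fun s => y j s - B)).
        apply dpl_eqv with (fsum N (fun k => alpha (sigma s) j k * (y k s - y j s)) - 0).
        apply (derivable_pt_lim_minus (y j) (fun _ => B)). apply Hd; auto; lra. apply derivable_pt_lim_const. ring.
      + assert (exp (- K * s) > 0) by apply exp_pos.
        set (p := fun j => pos (y j s - B)).
        assert (Hs0: 0 <= s) by lra.
        assert (A1: fsum N (fun j => 2 * p j * fsum N (fun k => alpha (sigma s) j k * (y k s - y j s))) <=
                    fsum N (fun j => fsum N (fun k => D * (p j * p j + p k * p k)))).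
        { apply fsum_le. intros j Hj. rewrite <- fsum_scal. apply fsum_le. intros k Hk.
          assert (Ha0 := Hw0 s Hs0 j k Hj Hk). assert (HaD := alpha_le_D s j k Hs0 Hj Hk).
          assert (P1: p j * (y k s - y j s) <= p j * p k).
          { unfold p. destruct (pos_cases (y j s - B)) as [[X Y]|[X Y]]; rewrite Y.
            - apply Rmult_le_compat_l. lra. pose proof (pos_ge (y k s - B)). lra.
            - lra. }
          assert (0 <= p j) by apply pos_ge0. assert (0 <= p k) by apply pos_ge0.
          assert (P2: p j * p k <= (p j * p j + p k * p k) / 2) by (pose proof (Rle_0_sqr (p j - p k)); unfold Rsqr in *; lra).
          assert (alpha (sigma s) j k * (p j * (y k s - y j s)) <= alpha (sigma s) j k * (p j * p k)) by
            (apply Rmult_le_compat_l; auto).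
          assert (alpha (sigma s) j k * (p j * p k) <= D * (p j * p k)) by (apply Rmult_le_compat_r; nra).
          assert (D * (p j * p k) <= D * ((p j * p j + p k * p k) / 2)) by (apply Rmult_le_compat_l; lra).
          nra. }
        assert (A2: fsum N (fun j => fsum N (fun k => D * (p j * p j + p k * p k))) = K * V s).
        { unfold K, V, p.
          rewrite (fsum_ext N _ (fun j => INR N * (D * (pos (y j s - B) * pos (y j s - B))) + D * fsum N (fun k => pos (y k s - B) * pos (y k s - B)))).
          rewrite fsum_plus, fsum_const, (fsum_scal N (INR N)), (fsum_scal N D). ring.
          intros j Hj. rewrite <- fsum_scal, <- fsum_const, <- fsum_plus. apply fsum_ext. intros; ring. }
        assert (E: - K * exp (- K * s) * V s + exp (- K * s) * fsum N (fun j => 2 * p j * fsum N (fun k => alpha (sigma s) j k * (y k s - y j s)))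
           = exp (- K * s) * (fsum N (fun j => 2 * p j * fsum N (fun k => alpha (sigma s) j k * (y k s - y j s))) - K * V s)) by ring.
        unfold p in E. rewrite E.
        pose proof (Rle_trans _ _ _ A1 (Req_le _ _ A2)) as XX. unfold p in XX. cbv beta in XX.
        match goal with |- ?e * ?z <= 0 => assert (e * z <= e * 0) by (apply Rmult_le_compat_l; lra) end.
        lra.
    - intros s Hs. unfold F. apply cont0_mult. lra. apply cont0_exp.
      unfold V. apply cont0_fsum. lra. intros j Hj. apply cont0_mult. lra.
      apply cont0_pos. lra. apply cont0_minus. lra. apply Hc; auto; lra. apply cont0_const.
      apply cont0_pos. lra. apply cont0_minus. lra. apply Hc; auto; lra. apply cont0_const. }
  assert (HV0: V t0 = 0).
  { unfold V. rewrite <- (fsum_zero N). apply fsum_ext. intros j Hj.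
    destruct (pos_cases (y j t0 - B)) as [[X Y]|[X Y]]. assert (y j t0 - B = 0) by (specialize (HB j Hj); lra).
    rewrite Y, H. ring. rewrite Y. ring. }
  assert (HVt: V t <= 0).
  { unfold F in HF. rewrite HV0 in HF. assert (exp (- K * t) > 0) by apply exp_pos.
    assert (exp (- K * t) * V t <= 0) by lra.
    destruct (Rle_dec (V t) 0); auto. assert (0 < exp (- K * t) * V t) by (apply Rmult_lt_0_compat; lra). lra. }
  assert (Hterm: pos (y i t - B) * pos (y i t - B) <= V t).
  { unfold V. apply (fsum_ge_term N (fun j => pos (y j t - B) * pos (y j t - B))); auto.
    intros. pose proof (pos_ge0 (y i0 t - B)). nra. }
  pose proof (pos_ge (y i t - B)). pose proof (pos_ge0 (y i t - B)).
  destruct (Rle_dec (y i t) B); auto. nra.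
Qed.

Lemma inv_lower y b t0 : isys y -> 0 <= t0 -> (forall i, (i < N)%nat -> b <= y i t0) ->
  forall t, t0 <= t -> forall i, (i < N)%nat -> b <= y i t.
Proof. intros Hy Ht0 Hb t Ht i Hi.
  assert (- y i t <= - b). { apply (inv_upper (fun i t => - y i t) (- b) t0); auto. apply isys_opp; auto.
    intros j Hj. specialize (Hb j Hj). lra. }
  lra. Qed.


Lemma gsum_bound y B t i : 0 <= t -> (i < N)%nat -> (forall j, (j < N)%nat -> y j t <= B) -> y i t <= B ->
  fsum N (fun j => alpha (sigma t) i j * (y j t - y i t)) <= D * (B - y i t).
Proof. intros Ht Hi Hb Hbi.
  apply Rle_trans with (fsum N (fun j => alpha (sigma t) i j * (B - y i t))).
  apply fsum_le. intros j Hj. apply Rmult_le_compat_l. apply Hw0; auto. specialize (Hb j Hj). lra.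
  rewrite (fsum_ext N _ (fun j => (B - y i t) * alpha (sigma t) i j)) by (intros; ring).
  rewrite fsum_scal. rewrite Rmult_comm. apply Rmult_le_compat_r. lra. apply Hdeg; auto. Qed.

Lemma exp_shift a b : exp (- D * a) * exp (D * b) = exp (- D * (a - b)).
Proof. rewrite <- exp_plus. f_equal. ring. Qed.

Lemma decay y B t0 i s t l : isys y -> 0 <= t0 ->
  (forall j u, (j < N)%nat -> t0 <= u -> y j u <= B) -> (i < N)%nat -> t0 <= s -> s <= t ->
  B - y i s >= l -> B - y i t >= l * exp (- D * (t - s)).
Proof.
  intros [Hc Hd] Ht0 Hb Hi Hs Hst Hl.
  set (F := fun u => exp (D * u) * (B - y i u)).
  assert (HF: 0 * (t - s) <= F t - F s).
  { apply (pw_mvt_ge ts tauD HtauD Hts0 Htsgap F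
      (fun u => D * exp (D * u) * (B - y i u) + exp (D * u) * (0 - fsum N (fun j => alpha (sigma u) i j * (y j u - y i u)))));
      try lra.
    - intros u Hu Hns. split.
      + unfold F. apply (derivable_pt_lim_mult (fun u => exp (D * u)) (fun u => B - y i u)). apply dpl_exp_lin.
        apply (derivable_pt_lim_minus (fun _ => B) (y i)). apply derivable_pt_lim_const. apply Hd; auto; lra.
      + assert (exp (D * u) > 0) by apply exp_pos.
        assert (G: fsum N (fun j => alpha (sigma u) i j * (y j u - y i u)) <= D * (B - y i u)).
        { apply gsum_bound; try lra; auto. intros; apply Hb; auto; lra. apply Hb; auto; lra. }
        assert (exp (D * u) * (D * (B - y i u) - fsum N (fun j => alpha (sigma u) i j * (y j u - y i u))) >= exp (D * u) * 0)
          by (apply Rmult_ge_compat_l; lra).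
        lra.
    - intros u Hu. unfold F. apply cont0_mult. lra. apply cont0_exp. apply cont0_minus. lra. apply cont0_const.
      apply Hc; auto; lra. }
  unfold F in HF.
  assert (E1: B - y i t = exp (- D * t) * (exp (D * t) * (B - y i t))).
  { rewrite <- Rmult_assoc. rewrite <- exp_plus. replace (- D * t + D * t) with 0 by ring. rewrite exp_0. ring. }
  assert (exp (D * s) * (B - y i s) >= exp (D * s) * l) by (apply Rmult_ge_compat_l; [left; apply exp_pos| lra]).
  assert (exp (- D * t) * (exp (D * t) * (B - y i t)) >= exp (- D * t) * (exp (D * s) * l)).
  { apply Rmult_ge_compat_l. left; apply exp_pos. lra. }
  rewrite E1. replace (l * exp (- D * (t - s))) with (exp (- D * t) * (exp (D * s) * l)). lra.
  rewrite <- exp_shift. ring. Qed.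

Lemma pull y B t0 w u s1 s2 l amin : isys y -> 0 <= t0 ->
  (forall j v, (j < N)%nat -> t0 <= v -> y j v <= B) -> (w < N)%nat -> (u < N)%nat ->
  t0 <= s1 -> s1 <= s2 -> 0 < amin -> 0 <= l ->
  (forall t, s1 < t < s2 -> amin <= alpha (sigma t) w u) ->
  (forall t, s1 <= t <= s2 -> B - y u t >= l) ->
  B - y w s2 >= amin * l / D * (1 - exp (- D * (s2 - s1))).
Proof.
  intros [Hc Hd] Ht0 Hb Hw Hu Hs1 Hs12 Ham Hl Hal Hgu.
  set (c := amin * l / D).
  set (F := fun v => exp (D * v) * (B - y w v - c)).
  assert (HF: 0 * (s2 - s1) <= F s2 - F s1).
  { apply (pw_mvt_ge ts tauD HtauD Hts0 Htsgap F
      (fun v => D * exp (D * v) * (B - y w v - c) + exp (D * v) * (0 - fsum N (fun j => alpha (sigma v) w j * (y j v - y w v)) - 0)));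
      try lra.
    - intros v Hv Hns. assert (Hv0: 0 <= v) by lra. split.
      + unfold F. apply (derivable_pt_lim_mult (fun v => exp (D * v)) (fun v => B - y w v - c)). apply dpl_exp_lin.
        apply (derivable_pt_lim_minus (fun v => B - y w v) (fun _ => c)).
        apply (derivable_pt_lim_minus (fun _ => B) (y w)). apply derivable_pt_lim_const. apply Hd; auto; lra.
        apply derivable_pt_lim_const.
      + assert (exp (D * v) > 0) by apply exp_pos.
        assert (Eq: fsum N (fun j => alpha (sigma v) w j * (y j v - y w v)) =
                    fsum N (fun j => alpha (sigma v) w j) * (B - y w v) - fsum N (fun j => alpha (sigma v) w j * (B - y j v))).
        { rewrite Rmult_comm, <- fsum_scal, <- fsum_minus. apply fsum_ext. intros; ring. }
        assert (G1: alpha (sigma v) w u * (B - y u v) <= fsum N (fun j => alpha (sigma v) w j * (B - y j v))).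
        { apply (fsum_ge_term N (fun j => alpha (sigma v) w j * (B - y j v))); auto. intros j Hj.
          apply Rmult_le_pos. apply Hw0; auto. specialize (Hb j v Hj ltac:(lra)). lra. }
        assert (G2: amin * l <= alpha (sigma v) w u * (B - y u v)).
        { apply Rmult_le_compat; try lra. apply Hal; lra. specialize (Hgu v ltac:(lra)). lra. }
        assert (G3: fsum N (fun j => alpha (sigma v) w j) * (B - y w v) <= D * (B - y w v)).
        { apply Rmult_le_compat_r. specialize (Hb w v Hw ltac:(lra)). lra. apply Hdeg; auto. }
        assert (Hc': D * c = amin * l) by (unfold c; field; lra).
        assert (exp (D * v) * (D * (B - y w v) - D * c - fsum N (fun j => alpha (sigma v) w j * (y j v - y w v))) >= exp (D * v) * 0)
          by (apply Rmult_ge_compat_l; lra).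
        lra.
    - intros v Hv. unfold F. apply cont0_mult. lra. apply cont0_exp. apply cont0_minus. lra.
      apply cont0_minus. lra. apply cont0_const. apply Hc; auto; lra. apply cont0_const. }
  unfold F in HF.
  assert (Hgw1: B - y w s1 >= 0) by (specialize (Hb w s1 Hw ltac:(lra)); lra).
  assert (Hc0: 0 <= c) by (unfold c; apply Rmult_le_pos; [apply Rmult_le_pos; lra| left; apply Rinv_0_lt_compat; lra]).
  assert (A: exp (D * s1) * (B - y w s1 - c) >= exp (D * s1) * (- c)) by (apply Rmult_ge_compat_l; [left; apply exp_pos|lra]).
  assert (A2: exp (- D * s2) * (exp (D * s2) * (B - y w s2 - c)) >= exp (- D * s2) * (exp (D * s1) * (- c))).
  { apply Rmult_ge_compat_l. left; apply exp_pos. lra. }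
  rewrite <- Rmult_assoc, <- exp_plus in A2. replace (- D * s2 + D * s2) with 0 in A2 by ring. rewrite exp_0 in A2.
  rewrite <- Rmult_assoc, exp_shift in A2. fold c.
  assert (c * (1 - exp (- D * (s2 - s1))) = c - c * exp (- D * (s2 - s1))) by ring. lra.
Qed.


Lemma exp_mono x y : x <= y -> exp x <= exp y.
Proof. intros H. destruct (Req_dec x y). subst; lra. left. apply exp_increasing. lra. Qed.

Lemma reach_edge (E : nat -> nat -> Prop) (P : nat -> Prop) r v :
  reachable E r v -> P r -> ~ P v -> exists a b, E b a /\ P a /\ ~ P b.
Proof. induction 1; intros Hr Hv. contradiction.
  destruct (classic (P u)). exists u, v. auto. apply IHreachable; auto. Qed.

Definition ind (P : Prop) : R := if excluded_middle_informative P then 1 else 0.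

Lemma ind_01 P : 0 <= ind P <= 1.
Proof. unfold ind. destruct excluded_middle_informative; lra. Qed.

Lemma count_mono (P Q : nat -> Prop) n : (forall i, (i < n)%nat -> P i -> Q i) ->
  fsum n (fun i => ind (P i)) <= fsum n (fun i => ind (Q i)).
Proof. intros H. apply fsum_le. intros i Hi. unfold ind.
  destruct (excluded_middle_informative (P i)); destruct (excluded_middle_informative (Q i)); try lra.
  exfalso; auto. Qed.

Lemma count_grow (P Q : nat -> Prop) n : (forall i, (i < n)%nat -> P i -> Q i) ->
  (exists w, (w < n)%nat /\ ~ P w /\ Q w) ->
  fsum n (fun i => ind (P i)) + 1 <= fsum n (fun i => ind (Q i)).
Proof. intros H [w [Hw [HP HQ]]]. induction n. lia. simpl.
  destruct (Nat.eq_dec w n).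
  - subst. assert (fsum n (fun i => ind (P i)) <= fsum n (fun i => ind (Q i))) by (apply count_mono; intros; apply H; auto; lia).
    unfold ind at 2 4. destruct (excluded_middle_informative (P n)); destruct (excluded_middle_informative (Q n)); try tauto. lra.
  - assert (fsum n (fun i => ind (P i)) + 1 <= fsum n (fun i => ind (Q i))) by (apply IHn; [intros; apply H; auto; lia| lia]).
    assert (ind (P n) <= ind (Q n)). { unfold ind.
      destruct (excluded_middle_informative (P n)); destruct (excluded_middle_informative (Q n)); try lra.
      exfalso; apply n1; apply H; auto. }
    lra. Qed.

Lemma count_cover (P Q : nat -> Prop) n : (forall i, (i < n)%nat -> P i \/ Q i) ->
  INR n <= fsum n (fun i => ind (P i)) + fsum n (fun i => ind (Q i)).
Proof. intros H. rewrite <- fsum_plus. rewrite <- (Rmult_1_r (INR n)). rewrite <- fsum_const.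
  apply fsum_le. intros i Hi. unfold ind.
  destruct (excluded_middle_informative (P i)); destruct (excluded_middle_informative (Q i)); try lra.
  destruct (H i Hi); tauto. Qed.

Lemma count_le n (P : nat -> Prop) : fsum n (fun i => ind (P i)) <= INR n.
Proof. rewrite <- (Rmult_1_r (INR n)). apply fsum_bound. intros. apply ind_01. Qed.

Hypothesis Hsig : forall k t, ts k <= t < ts (S k) -> sigma t = sigma (ts k).

Lemma active_int s : 0 <= s -> exists s1, s - tauD / 2 <= s1 <= s /\ 0 <= s1 /\
  forall t, s1 < t < s1 + tauD / 2 -> sigma t = sigma s.
Proof. intros Hs. destruct (ts_interval ts tauD HtauD Hts0 Htsgap s Hs) as [k Hk].
  assert (Htk: 0 <= ts k) by (rewrite <- Hts0; apply (ts_mono ts tauD HtauD Htsgap); lia).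
  pose proof (Htsgap k).
  assert (Hsk: sigma s = sigma (ts k)) by (apply Hsig; auto).
  destruct (Rle_dec (s + tauD / 2) (ts (S k))).
  - exists s. split. lra. split. lra. intros t Ht. rewrite Hsk. apply Hsig. lra.
  - exists (s - tauD / 2). split. lra. split. lra. intros t Ht. rewrite Hsk. apply Hsig. lra. Qed.

Variable amin : R.
Hypothesis Hamin : 0 < amin.
Hypothesis HaminD : amin <= D.
Hypothesis Hmin : forall t, 0 <= t -> forall i j, (i < N)%nat -> (j < N)%nat ->
  0 < alpha (sigma t) i j -> amin <= alpha (sigma t) i j.
Variable T : R.
Hypothesis HT : T > 0.

Definition Pw := T + tauD.
Definition kap := exp (- D * Pw).
Definition piC := amin * (1 - exp (- D * (tauD / 2))) / D.
Definition gam := piC * kap * kap.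

Lemma kap_bounds : 0 < kap <= 1.
Proof. unfold kap, Pw. split. apply exp_pos. rewrite <- exp_0. apply exp_mono.
  assert (0 < D * (T + tauD)) by (apply Rmult_lt_0_compat; lra). lra. Qed.

Lemma piC_bounds : 0 < piC <= 1.
Proof. unfold piC. assert (exp (- D * (tauD / 2)) < 1).
  { rewrite <- exp_0. apply exp_increasing. assert (0 < D * (tauD / 2)) by (apply Rmult_lt_0_compat; lra). lra. }
  assert (0 < exp (- D * (tauD / 2))) by apply exp_pos.
  split. apply Rdiv_lt_0_compat; [apply Rmult_lt_0_compat|]; lra.
  apply Rmult_le_reg_r with D. lra. unfold Rdiv. rewrite Rmult_assoc, Rinv_l by lra. nra. Qed.

Lemma gam_bounds : 0 < gam <= 1 /\ gam <= kap.
Proof. pose proof kap_bounds. pose proof piC_bounds. unfold gam. split. split.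
  apply Rmult_lt_0_compat; [apply Rmult_lt_0_compat|]; lra.
  assert (piC * kap <= 1) by nra. nra.
  assert (piC * kap <= 1) by nra. nra. Qed.

Lemma persist y B e i l : isys y -> 0 <= e ->
  (forall j u, (j < N)%nat -> e <= u -> y j u <= B) -> (i < N)%nat -> 0 <= l ->
  B - y i e >= l -> B - y i (e + Pw) >= gam * l.
Proof. intros Hy He Hb Hi Hl H.
  assert (A := decay y B e i e (e + Pw) l Hy He Hb Hi ltac:(lra) ltac:(unfold Pw; lra) H).
  replace (e + Pw - e) with Pw in A by ring. fold kap in A.
  destruct gam_bounds as [_ G]. pose proof kap_bounds. assert (gam * l <= kap * l) by (apply Rmult_le_compat_r; lra).
  lra. Qed.

Lemma grow y B e l : isys y -> 0 <= e ->
  (forall j u, (j < N)%nat -> e <= u -> y j u <= B) -> 0 <= l ->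
  (exists r, (r < N)%nat /\ B - y r e >= l /\
     forall v, (v < N)%nat -> reachable (union_edge N alpha sigma (e + tauD / 2) T) r v) ->
  (exists v, (v < N)%nat /\ ~ (B - y v e >= l)) ->
  exists w, (w < N)%nat /\ ~ (B - y w e >= l) /\ B - y w (e + Pw) >= gam * l.
Proof.
  intros Hy He Hb Hl [r [Hr [Hrl Hreach]]] [v [Hv Hvl]].
  destruct (reach_edge _ (fun i => B - y i e >= l) r v (Hreach v Hv) Hrl Hvl) as [a [b [Eab [Pa Pb]]]].
  destruct Eab as [Hb' [Ha' [s [Hs Hal]]]].
  destruct (active_int s ltac:(lra)) as [s1 [Hs1 [Hs10 Hsc]]].
  pose proof kap_bounds. pose proof piC_bounds.
  assert (Hexp: forall x, 0 <= x <= Pw -> exp (- D * x) >= kap).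
  { intros x Hx. unfold kap. apply Rle_ge, exp_mono. assert (D * x <= D * Pw) by (apply Rmult_le_compat_l; lra).
    replace (- D * x) with (- (D * x)) by ring. replace (- D * Pw) with (- (D * Pw)) by ring. lra. }
  assert (Hga: forall t, s1 <= t <= s1 + tauD / 2 -> B - y a t >= l * kap).
  { intros t Ht. assert (A := decay y B e a e t l Hy He Hb Ha' ltac:(lra) ltac:(lra) Pa).
    assert (exp (- D * (t - e)) >= kap) by (apply Hexp; unfold Pw; lra).
    assert (l * exp (- D * (t - e)) >= l * kap) by (apply Rmult_ge_compat_l; lra). lra. }
  assert (Hpull := pull y B e b a s1 (s1 + tauD / 2) (l * kap) amin Hy He Hb Hb' Ha' ltac:(lra) ltac:(lra) Hamin
     ltac:(apply Rmult_le_pos; lra)).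
  assert (Hp: B - y b (s1 + tauD / 2) >= piC * l * kap).
  { replace (piC * l * kap) with (amin * (l * kap) / D * (1 - exp (- D * (s1 + tauD / 2 - s1)))).
    apply Hpull. intros t Ht. rewrite Hsc by lra. apply Hmin; auto; lra. auto.
    unfold piC. replace (s1 + tauD / 2 - s1) with (tauD / 2) by ring. field. lra. }
  exists b. split; auto. split; auto.
  assert (A := decay y B e b (s1 + tauD / 2) (e + Pw) (piC * l * kap) Hy He Hb Hb' ltac:(lra) ltac:(unfold Pw; lra) Hp).
  assert (exp (- D * (e + Pw - (s1 + tauD / 2))) >= kap) by (apply Hexp; unfold Pw; lra).
  assert (0 <= piC * l * kap) by (apply Rmult_le_pos; [apply Rmult_le_pos|]; lra).
  assert (piC * l * kap * exp (- D * (e + Pw - (s1 + tauD / 2))) >= piC * l * kap * kap) by (apply Rmult_ge_compat_l; lra).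
  unfold gam. replace (piC * kap * kap * l) with (piC * l * kap * kap) by ring. lra.
Qed.

Hypothesis Hcon : forall t, 0 <= t -> exists r, (r < N)%nat /\
  forall v, (v < N)%nat -> reachable (union_edge N alpha sigma t T) r v.

Lemma contract y t0 b B : isys y -> 0 <= t0 -> b <= B ->
  (forall i, (i < N)%nat -> b <= y i t0 /\ y i t0 <= B) ->
  (forall i t, (i < N)%nat -> t0 + INR (S N) * Pw <= t -> y i t <= B - gam ^ (S N) * ((B - b) / 2) /\ b <= y i t) \/
  (forall i t, (i < N)%nat -> t0 + INR (S N) * Pw <= t -> b + gam ^ (S N) * ((B - b) / 2) <= y i t /\ y i t <= B).
Proof.
  intros Hy Ht0 HbB Hinit.
  assert (HU: forall j u, (j < N)%nat -> t0 <= u -> y j u <= B).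
  { intros j u Hj Hu. apply (inv_upper y B t0 Hy Ht0); auto. intros; apply Hinit; auto. }
  assert (HL: forall j u, (j < N)%nat -> t0 <= u -> b <= y j u).
  { intros j u Hj Hu. apply (inv_lower y b t0 Hy Ht0); auto. intros; apply Hinit; auto. }
  set (yt := fun i t => - y i t).
  assert (Hyt: isys yt) by (apply isys_opp; auto).
  assert (HUt: forall j u, (j < N)%nat -> t0 <= u -> yt j u <= - b).
  { intros j u Hj Hu. unfold yt. specialize (HL j u Hj Hu). lra. }
  set (e := fun k => t0 + INR k * Pw).
  set (eps := fun k => gam ^ k * ((B - b) / 2)).
  assert (HPw: 0 < Pw) by (unfold Pw; lra).
  assert (He: forall k, t0 <= e k) by (intros k; unfold e; pose proof (pos_INR k); nra).
  assert (HeS: forall k, e (S k) = e k + Pw) by (intros k; unfold e; rewrite S_INR; ring).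
  destruct gam_bounds as [[Hg0 Hg1] _].
  assert (Heps: forall k, 0 <= eps k) by (intros k; unfold eps; apply Rmult_le_pos; [apply pow_le; lra| lra]).
  assert (HepsS: forall k, eps (S k) = gam * eps k) by (intros k; unfold eps; simpl; ring).
  set (Low := fun k i => B - y i (e k) >= eps k).
  set (High := fun k i => - b - yt i (e k) >= eps k).
  assert (PL: forall k i, (i < N)%nat -> Low k i -> Low (S k) i).
  { intros k i Hi H. unfold Low. rewrite HeS, HepsS. apply (persist y B (e k) i (eps k) Hy).
    pose proof (He k); lra. intros; apply HU; auto; pose proof (He k); lra. auto. auto. auto. }
  assert (PH: forall k i, (i < N)%nat -> High k i -> High (S k) i).
  { intros k i Hi H. unfold High. rewrite HeS, HepsS. apply (persist yt (- b) (e k) i (eps k) Hyt).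
    pose proof (He k); lra. intros; apply HUt; auto; pose proof (He k); lra. auto. auto. auto. }
  assert (J: forall k, (forall i, (i < N)%nat -> Low k i \/ High k i) /\
     ((forall i, (i < N)%nat -> Low k i) \/ (forall i, (i < N)%nat -> High k i) \/
      INR N + INR k <= fsum N (fun i => ind (Low k i)) + fsum N (fun i => ind (High k i)))).
  { induction k.
    - assert (Cov: forall i, (i < N)%nat -> Low 0%nat i \/ High 0%nat i).
      { intros i Hi. unfold Low, High, yt, e, eps. simpl. rewrite Rmult_0_l, Rplus_0_r, Rmult_1_l.
        destruct (Hinit i Hi). destruct (Rle_dec (y i t0) ((B + b) / 2)); [left|right]; lra. }
      split; auto. right; right. simpl INR. rewrite Rplus_0_r. apply count_cover; auto.
    - destruct IHk as [Cov Rest]. split.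
      { intros i Hi. destruct (Cov i Hi); [left; apply PL | right; apply PH]; auto. }
      destruct Rest as [AL|[AH|Cnt]].
      + left. intros i Hi. apply PL; auto.
      + right; left. intros i Hi. apply PH; auto.
      + destruct (Hcon (e k + tauD / 2)) as [r [Hr Hreach]]. pose proof (He k); lra.
        destruct (classic (forall i, (i < N)%nat -> Low k i)) as [AL|NAL].
        { left. intros i Hi. apply PL; auto. }
        destruct (classic (forall i, (i < N)%nat -> High k i)) as [AH|NAH].
        { right; left. intros i Hi. apply PH; auto. }
        right; right. rewrite S_INR.
        destruct (Cov r Hr) as [Lr|Hr'].
        * destruct (grow y B (e k) (eps k) Hy) as [w [Hw [Hw1 Hw2]]].
          pose proof (He k); lra. intros; apply HU; auto; pose proof (He k); lra. auto.
          exists r; split; auto.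
          apply not_all_ex_not in NAL. destruct NAL as [v Hv]. exists v.
          destruct (classic (v < N)%nat) as [Hvn|Hvn]; [split; [exact Hvn| intro HH; apply Hv; intros; exact HH] | exfalso; apply Hv; intros; lia].
          assert (G1: fsum N (fun i => ind (Low k i)) + 1 <= fsum N (fun i => ind (Low (S k) i))).
          { apply count_grow. apply PL. exists w. split; auto. split; auto. unfold Low. rewrite HeS, HepsS. auto. }
          assert (G2: fsum N (fun i => ind (High k i)) <= fsum N (fun i => ind (High (S k) i))) by (apply count_mono; apply PH).
          lra.
        * destruct (grow yt (- b) (e k) (eps k) Hyt) as [w [Hw [Hw1 Hw2]]].
          pose proof (He k); lra. intros; apply HUt; auto; pose proof (He k); lra. auto.
          exists r; split; auto.
          apply not_all_ex_not in NAH. destruct NAH as [v Hv]. exists v.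
          destruct (classic (v < N)%nat) as [Hvn|Hvn]; [split; [exact Hvn| intro HH; apply Hv; intros; exact HH] | exfalso; apply Hv; intros; lia].
          assert (G1: fsum N (fun i => ind (High k i)) + 1 <= fsum N (fun i => ind (High (S k) i))).
          { apply count_grow. apply PH. exists w. split; auto. split; auto. unfold High. rewrite HeS, HepsS. auto. }
          assert (G2: fsum N (fun i => ind (Low k i)) <= fsum N (fun i => ind (Low (S k) i))) by (apply count_mono; apply PL).
          lra. }
  destruct (J (S N)) as [_ [AL|[AH|Cnt]]].
  - left. intros i t Hi Ht. split.
    + apply (inv_upper y (B - eps (S N)) (e (S N)) Hy). pose proof (He (S N)); lra.
      intros j Hj. specialize (AL j Hj). unfold Low in AL. lra. auto. auto.
    + apply HL; auto. pose proof (pos_INR (S N)). nra.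
  - right. intros i t Hi Ht. split.
    + apply (inv_lower y (b + eps (S N)) (e (S N)) Hy). pose proof (He (S N)); lra.
      intros j Hj. specialize (AH j Hj). unfold High, yt in AH. lra. auto. auto.
    + apply HU; auto. pose proof (pos_INR (S N)). nra.
  - exfalso. pose proof (count_le N (fun i => Low (S N) i)). pose proof (count_le N (fun i => High (S N) i)).
    rewrite S_INR in Cnt. lra.
Qed.

Lemma fin_bounds n (f : nat -> R) : exists b B, b <= B /\ forall i, (i < n)%nat -> b <= f i /\ f i <= B.
Proof. induction n. exists 0, 0. split. lra. intros; lia.
  destruct IHn as [b [B [H1 H2]]]. exists (Rmin b (f n)), (Rmax B (f n)). split.
  pose proof (Rmin_l b (f n)). pose proof (Rmax_l B (f n)). lra.
  intros i Hi. destruct (Nat.eq_dec i n). subst. split. apply Rmin_r. apply Rmax_r.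
  destruct (H2 i ltac:(lia)). pose proof (Rmin_l b (f n)). pose proof (Rmax_l B (f n)). lra. Qed.

Lemma consensus y : isys y -> forall eps, eps > 0 -> exists T0, forall t, t >= T0 ->
  forall i j, (i < N)%nat -> (j < N)%nat -> Rabs (y i t - y j t) < eps.
Proof.
  intros Hy eps Heps.
  destruct (fin_bounds N (fun i => y i 0)) as [b0 [B0 [Hb0 Hinit]]].
  set (Q := INR (S N) * Pw).
  set (g := gam ^ (S N)).
  destruct gam_bounds as [[Hg0 Hg1] _].
  assert (Hg: 0 < g <= 1). { unfold g. split. apply pow_lt; lra.
    rewrite <- (pow1 (S N)). apply pow_incr. lra. }
  set (rho := 1 - g / 2).
  assert (Hrho: 0 < rho < 1) by (unfold rho; lra).
  assert (HQ: 0 <= Q) by (unfold Q, Pw; pose proof (pos_INR (S N)); apply Rmult_le_pos; lra).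
  assert (It: forall n, exists b B, b <= B /\ B - b <= rho ^ n * (B0 - b0) /\
     forall i t, (i < N)%nat -> INR n * Q <= t -> b <= y i t /\ y i t <= B).
  { induction n.
    - exists b0, B0. split; auto. split. simpl; lra. intros i t Hi Ht. simpl in Ht. rewrite Rmult_0_l in Ht.
      split. apply (inv_lower y b0 0 Hy); auto; try lra. intros; apply Hinit; auto.
      apply (inv_upper y B0 0 Hy); auto; try lra. intros; apply Hinit; auto.
    - destruct IHn as [b [B [HbB [Hsp Hbd]]]].
      assert (Hn0: 0 <= INR n * Q) by (apply Rmult_le_pos; auto; apply pos_INR).
      assert (Hcase := contract y (INR n * Q) b B Hy Hn0 HbB (fun i Hi => Hbd i (INR n * Q) Hi (Rle_refl _))).
      assert (HS: forall t, INR (S n) * Q <= t -> INR n * Q + INR (S N) * Pw <= t) by (intros t; rewrite S_INR; unfold Q; lra).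
      assert (Hef: 0 <= g * ((B - b) / 2) <= (B - b) / 2).
      { split. apply Rmult_le_pos; lra. assert (g * ((B - b) / 2) <= 1 * ((B - b) / 2)) by (apply Rmult_le_compat_r; lra). lra. }
      assert (Hsp': (B - b) * rho <= rho ^ S n * (B0 - b0)).
      { simpl. rewrite (Rmult_comm rho). rewrite Rmult_assoc. rewrite (Rmult_comm rho). rewrite <- Rmult_assoc.
        apply Rmult_le_compat_r; lra. }
      destruct Hcase as [C1'|C2'].
      + exists b, (B - g * ((B - b) / 2)). split. lra. split.
        assert (B - g * ((B - b) / 2) - b = (B - b) * rho) by (unfold rho; field). lra.
        intros i t Hi Ht. destruct (C1' i t Hi (HS t Ht)) as [X1 X2]. change (gam ^ S N) with g in X1. split; lra.
      + exists (b + g * ((B - b) / 2)), B. split. lra. split.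
        assert (B - (b + g * ((B - b) / 2)) = (B - b) * rho) by (unfold rho; field). lra.
        intros i t Hi Ht. destruct (C2' i t Hi (HS t Ht)) as [X1 X2]. change (gam ^ S N) with g in X1. split; lra. }
  destruct (pow_lt_1_zero rho ltac:(rewrite Rabs_right; lra) (eps / (B0 - b0 + 1))) as [n0 Hn0].
  apply Rdiv_lt_0_compat; lra.
  destruct (It n0) as [b [B [HbB [Hsp Hbd]]]].
  exists (INR n0 * Q). intros t Ht i j Hi Hj.
  destruct (Hbd i t Hi ltac:(lra)). destruct (Hbd j t Hj ltac:(lra)).
  specialize (Hn0 n0 (le_n _)). rewrite Rabs_right in Hn0 by (left; apply pow_lt; lra).
  assert (rho ^ n0 * (B0 - b0) <= eps / (B0 - b0 + 1) * (B0 - b0)) by (apply Rmult_le_compat_r; lra).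
  assert (eps / (B0 - b0 + 1) * (B0 - b0) < eps).
  { apply Rmult_lt_reg_r with (B0 - b0 + 1). lra. unfold Rdiv.
    replace (eps * / (B0 - b0 + 1) * (B0 - b0) * (B0 - b0 + 1)) with (eps * (B0 - b0)) by (field; lra). nra. }
  apply Rabs_def1; lra.
Qed.

End Cons.

Lemma fin2_ub M N (f : nat -> nat -> R) : exists c, forall k i, (k < M)%nat -> (i < N)%nat -> f k i <= c.
Proof. induction M. exists 0. intros; lia.
  destruct IHM as [c Hc]. destruct (fin_bounds N (f M)) as [b [B [_ HB]]].
  exists (Rmax c B). intros k i Hk Hi. destruct (Nat.eq_dec k M). subst.
  destruct (HB i Hi). pose proof (Rmax_r c B). lra.
  pose proof (Hc k i ltac:(lia) Hi). pose proof (Rmax_l c B). lra. Qed.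

Lemma fin1_minpos n (f : nat -> R) : exists a, 0 < a /\ forall i, (i < n)%nat -> 0 < f i -> a <= f i.
Proof. induction n. exists 1. split. lra. intros; lia.
  destruct IHn as [a [Ha H]]. destruct (Rlt_dec 0 (f n)).
  - exists (Rmin a (f n)). split. apply Rmin_pos; lra. intros i Hi Hf. destruct (Nat.eq_dec i n). subst. apply Rmin_r.
    pose proof (H i ltac:(lia) Hf). pose proof (Rmin_l a (f n)). lra.
  - exists a. split; auto. intros i Hi Hf. destruct (Nat.eq_dec i n). subst. lra. apply H; auto; lia. Qed.

Lemma fin2_minpos M N (f : nat -> nat -> R) : exists a, 0 < a /\ forall k i, (k < M)%nat -> (i < N)%nat -> 0 < f k i -> a <= f k i.
Proof. induction M. exists 1. split. lra. intros; lia.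
  destruct IHM as [a [Ha H]]. destruct (fin1_minpos N (f M)) as [b [Hb Hb']].
  exists (Rmin a b). split. apply Rmin_pos; lra. intros k i Hk Hi Hf. destruct (Nat.eq_dec k M). subst.
  pose proof (Hb' i Hi Hf). pose proof (Rmin_r a b). lra.
  pose proof (H k i ltac:(lia) Hi Hf). pose proof (Rmin_l a b). lra. Qed.

Lemma fin3_minpos M N (f : nat -> nat -> nat -> R) : exists a, 0 < a /\
  forall k i j, (k < M)%nat -> (i < N)%nat -> (j < N)%nat -> 0 < f k i j -> a <= f k i j.
Proof. induction M. exists 1. split. lra. intros; lia.
  destruct IHM as [a [Ha H]]. destruct (fin2_minpos N N (f M)) as [b [Hb Hb']].
  exists (Rmin a b). split. apply Rmin_pos; lra. intros k i j Hk Hi Hj Hf. destruct (Nat.eq_dec k M). subst.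
  pose proof (Hb' i j Hi Hj Hf). pose proof (Rmin_r a b). lra.
  pose proof (H k i j ltac:(lia) Hi Hj Hf). pose proof (Rmin_l a b). lra. Qed.

Lemma ev_all n (P : nat -> R -> Prop) : (forall k, (k < n)%nat -> exists T, forall t, t >= T -> P k t) ->
  exists T, forall t, t >= T -> forall k, (k < n)%nat -> P k t.
Proof. induction n; intros H. exists 0. intros; lia.
  destruct IHn as [T1 H1]. intros; apply H; lia. destruct (H n ltac:(lia)) as [T2 H2].
  exists (Rmax T1 T2). intros t Ht k Hk. destruct (Nat.eq_dec k n). subst. apply H2. pose proof (Rmax_r T1 T2); lra.
  apply H1. pose proof (Rmax_l T1 T2); lra. lia. Qed.

Lemma fst_Csum n f : fst (Csum n f) = fsum n (fun k => fst (f k)).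
Proof. induction n; simpl; auto. rewrite IHn; auto. Qed.
Lemma snd_Csum n f : snd (Csum n f) = fsum n (fun k => snd (f k)).
Proof. induction n; simpl; auto. rewrite IHn; auto. Qed.

Lemma dot_K1 m' a X : dot (S m') (K1vec a) X = - fsum m' (fun l => a (S l) * X (S l)).
Proof. unfold dot. rewrite fsum_shift. unfold K1vec at 1. simpl Nat.eqb. cbv iota.
  rewrite <- fsum_opp. rewrite Rmult_0_l, Rplus_0_l. apply fsum_ext. intros. unfold K1vec. simpl Nat.eqb. cbv iota. ring. Qed.

Lemma dot_minus m v X Y : dot m v (fun l => X l - Y l) = dot m v X - dot m v Y.
Proof. unfold dot. rewrite <- fsum_minus. apply fsum_ext. intros; ring. Qed.

Lemma K2_lt m' a l : (l < m')%nat -> K2vec (S m') a l = a (S l).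
Proof. intros H. unfold K2vec. replace (Nat.ltb (l + 1) (S m')) with true. f_equal; lia.
  symmetry; apply Nat.ltb_lt; lia. Qed.
Lemma K2_last m' a : K2vec (S m') a m' = 1.
Proof. unfold K2vec. replace (Nat.ltb (m' + 1) (S m')) with false. auto. symmetry; apply Nat.ltb_ge; lia. Qed.

Lemma y_deriv_alg m' a N alpha k X j :
  fsum (S m') (fun l => K2vec (S m') a l * rhs N (S m') a alpha k X j l) =
  fsum N (fun i => alpha k j i * (dot (S m') (K2vec (S m') a) (X i) - dot (S m') (K2vec (S m') a) (X j))).
Proof.
  simpl fsum. rewrite K2_last. unfold rhs at 2. replace (Nat.ltb (m' + 1) (S m')) with false by (symmetry; apply Nat.ltb_ge; lia).
  rewrite (fsum_ext m' _ (fun l => a (S l) * X j (S l))).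
  2: { intros l Hl. rewrite K2_lt by auto. unfold rhs. replace (Nat.ltb (l + 1) (S m')) with true by (symmetry; apply Nat.ltb_lt; lia).
       replace (l + 1)%nat with (S l) by lia. auto. }
  unfold input. rewrite dot_K1.
  rewrite (fsum_ext N (fun j0 => alpha k j j0 * dot (S m') (K2vec (S m') a) (fun l => X j l - X j0 l))
    (fun i => - (alpha k j i * (dot (S m') (K2vec (S m') a) (X i) - dot (S m') (K2vec (S m') a) (X j))))).
  rewrite fsum_opp. ring.
  intros i Hi. rewrite dot_minus. ring. Qed.

Lemma bal_alg N alpha k (Y : nat -> R) : (forall i, (i < N)%nat -> alpha k i i = 0) ->
  (forall j, (j < N)%nat -> fsum N (fun i => laplacian N alpha k i j) = 0) ->
  fsum N (fun j => fsum N (fun i => alpha k j i * (Y i - Y j))) = 0.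
Proof.
  intros H0 Hb.
  assert (Col: forall j, (j < N)%nat -> fsum N (fun i => alpha k i j) = fsum N (fun l => alpha k j l)).
  { intros j Hj. specialize (Hb j Hj).
    rewrite (fsum_ext N _ (fun i => (if Nat.eqb j i then fsum N (fun l => alpha k j l) + alpha k j j else 0) - alpha k i j)) in Hb.
    rewrite fsum_minus, fsum_delta in Hb by auto. rewrite H0 in Hb by auto. lra.
    intros i Hi. unfold laplacian. destruct (Nat.eqb_spec i j); destruct (Nat.eqb_spec j i); try lia.
    subst. ring. ring. }
  rewrite (fsum_ext N _ (fun j => fsum N (fun i => alpha k j i * Y i) - fsum N (fun i => alpha k j i) * Y j)).
  rewrite fsum_minus. rewrite fsum_swap.
  rewrite (fsum_ext N (fun i => fsum N (fun j => alpha k j i * Y i)) (fun i => fsum N (fun l => alpha k i l) * Y i)). ring.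
  intros i Hi. rewrite <- Col by auto. rewrite (Rmult_comm _ (Y i)), <- fsum_scal. apply fsum_ext; intros; ring.
  intros j Hj. rewrite (Rmult_comm _ (Y j)), <- fsum_scal, <- fsum_minus. apply fsum_ext; intros; ring. Qed.

Theorem mainTheorem3
  (N m M : nat) (Hm : (2 <= m)%nat)
  (a : nat -> R) (Hhur : hurwitz m a)
  (alpha : nat -> nat -> nat -> R) (Hw : valid_weights N M alpha)
  (Hbal : forall k, (k < M)%nat -> balanced N alpha k)
  (sigma : R -> nat) (tauD : R) (HtauD : 0 < tauD)
  (ts : nat -> R) (Hsw : switching_signal M sigma tauD ts)
  (Hconn : uniformly_jointly_quasi_strongly_connected N alpha sigma)
  (x : nat -> R -> nat -> R) (Hsol : is_solution N m a alpha sigma ts x) :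
  forall i l, (i < N)%nat -> (l < m)%nat ->
    converges_to (fun t => x i t l)
      (if Nat.eqb l 0
       then / (a 1%nat * INR N) * fsum N (fun j => dot m (K2vec m a) (x j 0))
       else 0).
Proof.
  intros i l Hi Hl.
  destruct Hsw as [Hts0 [Hgap [Hsigc HsigM]]].
  destruct Hconn as [T [HT Hcon]].
  destruct Hsol as [Hxc Hxd].
  destruct m as [|m']. lia.
  assert (Hm' : (1 <= m')%nat) by lia.
  assert (HN : (1 <= N)%nat) by lia.
  assert (Hw0 : forall t, 0 <= t -> forall i j, (i < N)%nat -> (j < N)%nat -> 0 <= alpha (sigma t) i j).
  { intros t Ht i0 j Hi0 Hj. apply (Hw (sigma t) i0 j (HsigM t Ht) Hi0 Hj). }
  destruct (fin2_ub M N (fun k i => fsum N (fun j => alpha k i j))) as [D0 HD0].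
  set (D := Rmax D0 1).
  assert (HD : D > 0) by (unfold D; pose proof (Rmax_r D0 1); lra).
  assert (Hdeg : forall t, 0 <= t -> forall i, (i < N)%nat -> fsum N (fun j => alpha (sigma t) i j) <= D).
  { intros t Ht i0 Hi0. pose proof (HD0 (sigma t) i0 (HsigM t Ht) Hi0). pose proof (Rmax_l D0 1). unfold D; lra. }
  destruct (fin3_minpos M N alpha) as [a0 [Ha0 Hmin0]].
  set (amin := Rmin a0 D).
  assert (Hamin : 0 < amin) by (unfold amin; apply Rmin_pos; lra).
  assert (HaminD : amin <= D) by apply Rmin_r.
  assert (Hmin : forall t, 0 <= t -> forall i j, (i < N)%nat -> (j < N)%nat ->
     0 < alpha (sigma t) i j -> amin <= alpha (sigma t) i j).
  { intros t Ht i0 j Hi0 Hj Hp. pose proof (Hmin0 (sigma t) i0 j (HsigM t Ht) Hi0 Hj Hp). pose proof (Rmin_l a0 D). unfold amin; lra. }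
  set (y := fun j t => dot (S m') (K2vec (S m') a) (x j t)).
  assert (Hy : isys ts N alpha sigma y).
  { split.
    - intros j Hj t Ht. unfold y, dot. apply cont0_fsum; auto. intros l0 Hl0. apply cont0_scal; auto.
      exact (Hxc j l0 Hj Hl0 t Ht).
    - intros t Ht Hns j Hj. apply dpl_eqv with (fsum (S m') (fun l0 => K2vec (S m') a l0 * rhs N (S m') a alpha (sigma t) (fun j => x j t) j l0)).
      unfold y, dot. apply (dpl_fsum (S m') (fun l0 s => K2vec (S m') a l0 * x j s l0)).
      intros l0 Hl0. apply derivable_pt_lim_scal. apply Hxd; auto.
      rewrite y_deriv_alg. auto. }
  assert (Hcons := consensus ts tauD HtauD Hts0 Hgap N alpha sigma D HD Hw0 Hdeg Hsigc amin Hamin HaminD Hmin T HT Hcon y Hy).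
  set (Ssum := fun t => fsum N (fun j => y j t)).
  assert (HScont : forall t, 0 <= t -> cont0 Ssum t).
  { intros t Ht. unfold Ssum. apply cont0_fsum; auto. intros j Hj. apply (proj1 Hy); auto. }
  assert (HSder : forall t, 0 < t -> (forall k, t <> ts k) ->
     derivable_pt_lim Ssum t 0).
  { intros t Ht Hns. apply dpl_eqv with (fsum N (fun j => fsum N (fun k => alpha (sigma t) j k * (y k t - y j t)))).
    unfold Ssum. apply (dpl_fsum N (fun j s => y j s)). intros j Hj. apply (proj2 Hy); auto.
    apply bal_alg. intros i0 Hi0. apply (Hw (sigma t) i0 i0 (HsigM t ltac:(lra)) Hi0 Hi0).
    apply Hbal. apply HsigM; lra. }
  assert (HSconst : forall t, 0 <= t -> Ssum t = Ssum 0).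
  { intros t Ht.
    assert (Ssum t - Ssum 0 <= 0 * (t - 0)).
    { apply (pw_mvt ts tauD HtauD Hts0 Hgap Ssum (fun _ => 0)); try lra.
      intros s Hs Hns. split. apply HSder; auto; lra. lra. intros s Hs. apply HScont; lra. }
    assert (0 * (t - 0) <= Ssum t - Ssum 0).
    { apply (pw_mvt_ge ts tauD HtauD Hts0 Hgap Ssum (fun _ => 0)); try lra.
      intros s Hs Hns. split. apply HSder; auto; lra. lra. intros s Hs. apply HScont; lra. }
    lra. }
  set (avg := Ssum 0 / INR N).
  assert (HNpos : 0 < INR N) by (apply lt_0_INR; lia).
  assert (Hyavg : forall eps, eps > 0 -> exists T0, forall t, t >= T0 -> Rabs (y i t - avg) < eps).
  { intros eps Heps. destruct (Hcons (eps / 2)) as [T0 HT0]. lra.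
    exists (Rmax T0 0). intros t Ht.
    assert (Ht0 : t >= T0) by (pose proof (Rmax_l T0 0); lra).
    assert (Ht1 : 0 <= t) by (pose proof (Rmax_r T0 0); lra).
    unfold avg. rewrite <- (HSconst t Ht1). unfold Ssum.
    replace (y i t - fsum N (fun j => y j t) / INR N) with (fsum N (fun j => y i t - y j t) / INR N).
    2: { rewrite fsum_minus, fsum_const. field. lra. }
    unfold Rdiv. rewrite Rabs_mult, Rabs_inv, (Rabs_right (INR N)) by lra.
    apply Rmult_lt_reg_r with (INR N). lra. rewrite Rmult_assoc, Rinv_l, Rmult_1_r by lra.
    eapply Rle_lt_trans. apply fsum_abs. eapply Rle_lt_trans. apply (fsum_bound N _ (eps / 2)).
    intros j Hj. left. apply HT0; auto. nra. }
  (* the Hurwitz subsystem of agent i *)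
  set (c := fun k => ((a (S k), 0) : Defs.C)).
  set (w := fun k t => ((x i t (S k), 0) : Defs.C)).
  set (h := fun t => ((- fsum N (fun j => alpha (sigma t) i j * (y i t - y j t)), 0) : Defs.C)).
  assert (Hroots : forall z, poly m' c z = C0 -> fst z < 0).
  { intros z Hz. apply Hhur. unfold char_poly. replace (S m' - 1)%nat with m' by lia.
    rewrite (Csum_ext m' _ (fun j => Cmul (c j) (Cpow z j))). exact Hz.
    intros j Hj. unfold c. replace (j + 1)%nat with (S j) by lia. auto. }
  assert (Hwc : forall k, (k < m')%nat -> forall t, 0 <= t -> ccont0 (w k) t).
  { intros k Hk t Ht. split. exact (Hxc i (S k) Hi ltac:(lia) t Ht). apply (cont0_ext (fun _ => 0)); [intros; reflexivity | apply cont0_const]. }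
  assert (Hwd : forall t, 0 < t -> (forall k, t <> ts k) -> forall j, (j < m')%nat ->
     cdpl (w j) t (if Nat.ltb (S j) m' then w (S j) t
                   else Cadd (Copp (Csum m' (fun k => Cmul (c k) (w k t)))) (h t))).
  { intros t Ht Hns k Hk. assert (Hx := Hxd t Ht Hns i (S k) Hi ltac:(lia)). unfold rhs in Hx.
    split.
    - eapply dpl_eqv. exact Hx.
      destruct (Nat.ltb_spec (S k) m').
      + replace (Nat.ltb (S k + 1) (S m')) with true by (symmetry; apply Nat.ltb_lt; lia). unfold w. simpl.
        f_equal; lia.
      + replace (Nat.ltb (S k + 1) (S m')) with false by (symmetry; apply Nat.ltb_ge; lia).
        unfold input. rewrite dot_K1. unfold Cadd, Copp. simpl fst. rewrite fst_Csum. unfold h. simpl fst.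
        rewrite (fsum_ext m' (fun k0 => a (S k0) * x i t (S k0) - 0 * 0) (fun l0 => a (S l0) * x i t (S l0))).
        2: { intros; ring. }
        rewrite (fsum_ext N (fun j => alpha (sigma t) i j * dot (S m') (K2vec (S m') a) (fun l0 => x i t l0 - x j t l0))
                            (fun j => alpha (sigma t) i j * (y i t - y j t))).
        ring. intros j Hj. rewrite dot_minus. auto.
    - apply dpl_eqv with 0. apply (dpl_ext (fun _ => 0)). intros; reflexivity. apply derivable_pt_lim_const.
      destruct (Nat.ltb_spec (S k) m'). auto.
      unfold Cadd, Copp. simpl snd. rewrite snd_Csum. unfold h. simpl snd.
      rewrite (fsum_ext m' _ (fun _ => 0)). rewrite fsum_zero. ring.
      intros; unfold c, w, Cmul; simpl; ring. }
  assert (Hhc : cconv0 h).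
  { intros eps Heps. destruct (Hcons (eps / (D + 1))) as [T0 HT0]. apply Rdiv_lt_0_compat; lra.
    exists (Rmax T0 0). intros t Ht.
    assert (Ht0 : t >= T0) by (pose proof (Rmax_l T0 0); lra).
    assert (Ht1 : 0 <= t) by (pose proof (Rmax_r T0 0); lra).
    unfold h. simpl fst. simpl snd. split.
    - rewrite Rabs_Ropp. eapply Rle_lt_trans. apply fsum_abs.
      apply Rle_lt_trans with (fsum N (fun j => alpha (sigma t) i j * (eps / (D + 1)))).
      apply fsum_le. intros j Hj. rewrite Rabs_mult. rewrite (Rabs_right (alpha _ _ _)) by (apply Rle_ge, Hw0; auto).
      apply Rmult_le_compat_l. apply Hw0; auto. left. apply HT0; auto.
      rewrite (fsum_ext N _ (fun j => (eps / (D + 1)) * alpha (sigma t) i j)) by (intros; ring).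
      rewrite fsum_scal. pose proof (Hdeg t Ht1 i Hi).
      assert (eps / (D + 1) * fsum N (fun j => alpha (sigma t) i j) <= eps / (D + 1) * D).
      { apply Rmult_le_compat_l. left; apply Rdiv_lt_0_compat; lra. auto. }
      assert (eps / (D + 1) * D < eps).
      { apply Rmult_lt_reg_r with (D + 1). lra. replace (eps / (D + 1) * D * (D + 1)) with (eps * D) by (field; lra). nra. }
      exact (Rle_lt_trans _ _ _ H0 H1).
    - rewrite Rabs_R0. lra. }
  assert (Hxconv := GLc ts tauD HtauD Hts0 Hgap m' c w h Hroots Hwc Hwd Hhc).
  destruct l as [|l'].
  - change (Nat.eqb 0 0) with true. cbv iota.
    assert (Ha1 : a 1%nat <> 0).
    { intro Ha. assert (Hz : char_poly (S m') a (0, 0) = (0, 0)).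
      { unfold char_poly. replace (S m' - 1)%nat with m' by lia.
        assert (Hp : forall k, Cpow (0, 0) (S k) = (0, 0)) by (intros k; simpl; unfold Cmul; simpl; f_equal; ring).
        destruct m' as [|m'']. lia. rewrite Hp.
        rewrite (Csum_ext (S m'') _ (fun _ => C0)).
        assert (forall n, Csum n (fun _ => C0) = C0) as Hs0.
        { intros n. induction n. reflexivity. simpl. rewrite IHn. unfold C0, Cadd. simpl. f_equal; ring. }
        rewrite Hs0. unfold C0, Cadd. simpl. f_equal; ring.
        intros j Hj. destruct j. simpl. rewrite Ha. unfold Cmul, C0. simpl. f_equal; ring.
        rewrite Hp. unfold Cmul, C0. simpl. f_equal; ring. }
      pose proof (Hhur _ Hz). simpl in H. lra. }
    assert (HA : 0 < Rabs (a 1%nat)) by (apply Rabs_pos_lt; auto).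
    assert (Hx0 : forall t, x i t 0%nat = (y i t - fsum m' (fun k => K2vec (S m') a (S k) * x i t (S k))) / a 1%nat).
    { intros t. unfold y, dot. rewrite fsum_shift. rewrite (K2_lt m' a 0) by lia. field. auto. }
    assert (Htarget : / (a 1%nat * INR N) * fsum N (fun j => dot (S m') (K2vec (S m') a) (x j 0)) = avg / a 1%nat).
    { unfold avg, Ssum, y. field. split; lra. }
    rewrite Htarget.
    intros eps Heps.
    set (Kb := fsum m' (fun k => Rabs (K2vec (S m') a (S k))) + 1).
    assert (HKb : 0 < Kb) by (unfold Kb; pose proof (fsum_nonneg m' (fun k => Rabs (K2vec (S m') a (S k))) (fun k _ => Rabs_pos _)); lra).
    destruct (Hyavg (eps * Rabs (a 1%nat) / 2)) as [T1 HT1]. apply Rdiv_lt_0_compat; [nra|lra].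
    destruct (ev_all m' (fun k t => Rabs (x i t (S k)) < eps * Rabs (a 1%nat) / (2 * Kb))) as [T2 HT2].
    { intros k Hk. destruct (Hxconv k Hk (eps * Rabs (a 1%nat) / (2 * Kb))) as [T3 HT3].
      apply Rdiv_lt_0_compat; nra. exists T3. intros t Ht. apply (HT3 t Ht). }
    exists (Rmax T1 T2). intros t Ht.
    assert (Ht1 : t >= T1) by (pose proof (Rmax_l T1 T2); lra).
    assert (Ht2 : t >= T2) by (pose proof (Rmax_r T1 T2); lra).
    rewrite Hx0.
    replace ((y i t - fsum m' (fun k => K2vec (S m') a (S k) * x i t (S k))) / a 1%nat - avg / a 1%nat)
      with (((y i t - avg) - fsum m' (fun k => K2vec (S m') a (S k) * x i t (S k))) / a 1%nat) by (field; auto).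
    unfold Rdiv. rewrite Rabs_mult, Rabs_inv.
    apply Rmult_lt_reg_r with (Rabs (a 1%nat)). auto. rewrite Rmult_assoc, Rinv_l, Rmult_1_r by lra.
    assert (B1 : Rabs (y i t - avg) < eps * Rabs (a 1%nat) / 2) by auto.
    assert (B2 : Rabs (fsum m' (fun k => K2vec (S m') a (S k) * x i t (S k))) <=
                 fsum m' (fun k => Rabs (K2vec (S m') a (S k))) * (eps * Rabs (a 1%nat) / (2 * Kb))).
    { eapply Rle_trans. apply fsum_abs. rewrite Rmult_comm, <- fsum_scal. apply fsum_le. intros k Hk.
      rewrite Rabs_mult, Rmult_comm. apply Rmult_le_compat_r. apply Rabs_pos. left. apply HT2; auto. }
    assert (B3 : fsum m' (fun k => Rabs (K2vec (S m') a (S k))) * (eps * Rabs (a 1%nat) / (2 * Kb)) <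
                 eps * Rabs (a 1%nat) / 2).
    { assert (0 < eps * Rabs (a 1%nat) / (2 * Kb)) by (apply Rdiv_lt_0_compat; nra).
      replace (eps * Rabs (a 1%nat) / 2) with (Kb * (eps * Rabs (a 1%nat) / (2 * Kb))) by (field; lra).
      apply Rmult_lt_compat_r; auto. unfold Kb; lra. }
    eapply Rle_lt_trans. apply Rabs_triang. rewrite Rabs_Ropp. lra.
  - change (Nat.eqb (S l') 0) with false. cbv iota.
    intros eps Heps. destruct (Hxconv l' ltac:(lia) eps Heps) as [T0 HT0]. exists T0. intros t Ht.
    destruct (HT0 t Ht) as [A _]. simpl in A. rewrite Rminus_0_r. auto.
Qed.
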